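(* Let $N\ge2$, $T=\{x\in\mathbb{R}^N:1<|x|<2\}$, $2<p<2^*$ ($2^*=\frac{2N}{N-2}$ if $N\ge3$, $+\infty$ if $N=2$). For $\lambda>0$ let $u_\lambda=u_\lambda(r)$ be the unique positive solution in $H^1_{0,rad}(T)$ of $-\Delta u+\lambda u=u^{p-1}$ in $T$, $u=0$ on $\partial T$, with unique maximum point $\bar r_\lambda\in(1,2)$. Let $\lambda_n\to+\infty$, $u_n=u_{\lambda_n}$, $\bar r_n=\bar r_{\lambda_n}$, $\omega_n(r)=\lambda_n^{\frac{1}{2-p}}u_n(r/\sqrt{\lambda_n}+\bar r_n)$ for $r\in(\sqrt{\lambda_n}(1-\bar r_n),\sqrt{\lambda_n}(2-\bar r_n))$, and let $W$ be the unique positive solution with maximum at $0$ of $-W''+W=W^{p-1}$ in $\mathbb{R}$, $W(r)\to0$ as $|r|\to\infty$. Then, after passing to a subsequence, $$\int_{\sqrt{\lambda_n}(1-\bar r_n)}^{\sqrt{\lambda_n}(2-\bar r_n)}\omega_n^2\,r^k\,dr\to\int_{-\infty}^{+\infty}W^2r^k\,dr,\qquad k=0,1,\dots,N-1.$$ *)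

(* Defs.v *)
From Stdlib Require Import Reals Lra.
From Coquelicot Require Import Coquelicot.
Open Scope R_scope.

Definition subcritical (N : nat) (p : R) : Prop :=
  2 < p /\ ((3 <= N)%nat -> p < 2 * INR N / (INR N - 2)).

(* v is a positive radial solution in H^1_{0,rad}(T), T = {1<|x|<2} in R^N, of
   -Δv + λ v = v^(p-1), written in the radial variable r = |x|:
   -v'' - (N-1)/r v' + λ v = v^(p-1) on (1,2), v(1)=v(2)=0, v > 0 on (1,2). *)
Definition pos_radial_sol (N : nat) (p lam : R) (v : R -> R) : Prop :=
  (forall r, 1 <= r <= 2 ->
     filterlim v (within (fun x => 1 <= x <= 2) (locally r)) (locally (v r))) /\
  v 1 = 0 /\ v 2 = 0 /\
  (forall r, 1 < r < 2 -> 0 < v r) /\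
  (forall r, 1 < r < 2 ->
     is_derive v r (Derive v r) /\
     is_derive (Derive v) r (Derive_n v 2 r) /\
     - Derive_n v 2 r - (INR N - 1) / r * Derive v r + lam * v r
       = Rpower (v r) (p - 1)).

Definition unique_max_point (v : R -> R) (rb : R) : Prop :=
  1 < rb < 2 /\ forall r, 1 < r < 2 -> r <> rb -> v r < v rb.

Definition ground_state (p : R) (W : R -> R) : Prop :=
  (forall r, 0 < W r) /\
  (forall r, W r <= W 0) /\
  (forall r, is_derive W r (Derive W r) /\
             is_derive (Derive W) r (Derive_n W 2 r) /\
             - Derive_n W 2 r + W r = Rpower (W r) (p - 1)) /\
  is_lim W p_infty 0 /\ is_lim W m_infty 0.

Definition rescaled (p lam rb : R) (u : R -> R) (r : R) : R :=
  Rpower lam (1 / (2 - p)) * u (r / sqrt lam + rb).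

(* Main.v *)
Require Import Defs.
From Stdlib Require Import Reals Lra Lia.
From Coquelicot Require Import Coquelicot.
Open Scope R_scope.

Section File1.
Implicit Types (f g df : R -> R) (x a b l k d : R).

Lemma d_eq f x a b : is_derive f x a -> a = b -> is_derive f x b.
Proof. intros H ->; exact H. Qed.

Lemma d_ext f g x a : (forall t, f t = g t) -> is_derive f x a -> is_derive g x a.
Proof. intros; eapply is_derive_ext; eauto. Qed.

Lemma d_plus f g x a b : is_derive f x a -> is_derive g x b ->
  is_derive (fun y => f y + g y) x (a + b).
Proof. intros H1 H2; exact (is_derive_plus f g x a b H1 H2). Qed.

Lemma d_minus f g x a b : is_derive f x a -> is_derive g x b ->
  is_derive (fun y => f y - g y) x (a - b).
Proof. intros H1 H2; exact (is_derive_minus f g x a b H1 H2). Qed.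

Lemma d_opp f x a : is_derive f x a -> is_derive (fun y => - f y) x (- a).
Proof. intros H1; exact (is_derive_opp f x a H1). Qed.

Lemma d_mult f g x a b : is_derive f x a -> is_derive g x b ->
  is_derive (fun y => f y * g y) x (a * g x + f x * b).
Proof. intros H1 H2; exact (is_derive_mult f g x a b H1 H2 Rmult_comm). Qed.

Lemma d_scal k f x a : is_derive f x a -> is_derive (fun y => k * f y) x (k * a).
Proof. intros H1; exact (is_derive_scal f x k a H1). Qed.

Lemma d_const k x : is_derive (fun _ => k) x 0.
Proof. exact (is_derive_const k x). Qed.

Lemma d_id x : is_derive (fun y => y) x 1.
Proof. exact (is_derive_id x). Qed.

Lemma d_comp f g x (df dg : R) : is_derive f (g x) df -> is_derive g x dg ->
  is_derive (fun y => f (g y)) x (dg * df).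
Proof. intros H1 H2; exact (is_derive_comp f g x df dg H1 H2). Qed.

Lemma d_exp x : is_derive exp x (exp x).
Proof. apply is_derive_Reals, derivable_pt_lim_exp. Qed.

Lemma d_rpow q x : 0 < x -> is_derive (fun y => Rpower y q) x (q * Rpower x (q - 1)).
Proof. intros; apply is_derive_Reals, derivable_pt_lim_power; auto. Qed.



Lemma d_sqr f x a : is_derive f x a -> is_derive (fun y => f y ^ 2) x (2 * f x * a).
Proof.
  intros H. apply d_ext with (f := fun y => f y * f y).
  intros; simpl; ring.
  eapply d_eq. apply (d_mult f f x a a H H). ring.
Qed.

Lemma d_cont f x a : is_derive f x a -> continuity_pt f x.
Proof.
  intros H. apply continuity_pt_filterlim. apply (ex_derive_continuous (K:=R_AbsRing) (V:=R_NormedModule) f x). exists a; exact H.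
Qed.

Lemma mvt_decr (f df : R -> R) (x1 x2 : R) :
  x1 <= x2 ->
  (forall x, x1 <= x <= x2 -> is_derive f x (df x)) ->
  (forall x, x1 <= x <= x2 -> df x <= 0) ->
  f x2 <= f x1.
Proof.
  intros H12 Hd Hn.
  destruct (MVT_gen f x1 x2 df) as [c [Hc Heq]].
  - intros x Hx. rewrite Rmin_left in Hx by lra; rewrite Rmax_right in Hx by lra.
    apply Hd; lra.
  - intros x Hx. rewrite Rmin_left in Hx by lra; rewrite Rmax_right in Hx by lra.
    apply (d_cont f x (df x)), Hd; lra.
  - rewrite Rmin_left in Hc by lra; rewrite Rmax_right in Hc by lra.
    specialize (Hn c Hc). nra.
Qed.

Lemma mvt_incr (f df : R -> R) (x1 x2 : R) :
  x1 <= x2 ->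
  (forall x, x1 <= x <= x2 -> is_derive f x (df x)) ->
  (forall x, x1 <= x <= x2 -> 0 <= df x) ->
  f x1 <= f x2.
Proof.
  intros H12 Hd Hn.
  assert (H := mvt_decr (fun y => - f y) (fun y => - df y) x1 x2 H12).
  assert (- f x2 <= - f x1); [|lra].
  apply H. intros; apply d_opp; auto. intros x Hx; specialize (Hn x Hx); lra.
Qed.

Lemma mvt_bound (f df : R -> R) (x1 x2 K : R) :
  x1 <= x2 ->
  (forall x, x1 <= x <= x2 -> is_derive f x (df x)) ->
  (forall x, x1 <= x <= x2 -> df x <= K) ->
  f x2 - f x1 <= K * (x2 - x1).
Proof.
  intros H12 Hd Hn.
  assert (H := mvt_decr (fun y => f y - K * y) (fun y => df y - K) x1 x2 H12).
  enough (f x2 - K * x2 <= f x1 - K * x1) by lra.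
  apply H. intros x Hx. apply d_minus; auto. eapply d_eq. apply d_scal, d_id. ring.
  intros x Hx; specialize (Hn x Hx); lra.
Qed.

Lemma deriv_pos_local f x l : is_derive f x l -> 0 < l ->
  exists d, 0 < d /\ forall h, 0 < h < d -> f x < f (x + h) /\ f (x - h) < f x.
Proof.
  intros Hd Hl. apply is_derive_Reals in Hd.
  destruct (Hd (l/2) ltac:(lra)) as [del Hdel].
  exists del. split; [apply cond_pos|]. intros h Hh. split.
  - assert (H1 := Hdel h ltac:(lra) ltac:(rewrite Rabs_pos_eq; lra)).
    apply Rabs_def2 in H1. destruct H1 as [H1 H2].
    assert (Hq : 0 < (f (x + h) - f x) / h) by lra.
    assert (f (x + h) - f x = ((f (x + h) - f x) / h) * h) by (field; lra).
    nra.
  - assert (H1 := Hdel (-h) ltac:(lra) ltac:(rewrite Rabs_Ropp, Rabs_pos_eq; lra)).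
    apply Rabs_def2 in H1. destruct H1 as [H1 H2].
    assert (Hq : 0 < (f (x + - h) - f x) / - h) by lra.
    assert (f (x + - h) - f x = ((f (x + - h) - f x) / - h) * - h) by (field; lra).
    replace (x - h) with (x + - h) by ring. nra.
Qed.

Lemma deriv_neg_local f x l : is_derive f x l -> l < 0 ->
  exists d, 0 < d /\ forall h, 0 < h < d -> f (x + h) < f x /\ f x < f (x - h).
Proof.
  intros Hd Hl.
  destruct (deriv_pos_local (fun y => - f y) x (- l) (d_opp _ _ _ Hd) ltac:(lra))
    as [d [Hd0 H]].
  exists d; split; auto. intros h Hh; specialize (H h Hh); lra.
Qed.

Lemma deriv_max_zero f x l d : is_derive f x l -> 0 < d ->
  (forall y, x - d < y < x + d -> f y <= f x) -> l = 0.
Proof.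
  intros Hd Hd0 Hm.
  destruct (Rtotal_order l 0) as [Hl|[Hl|Hl]]; auto.
  - destruct (deriv_neg_local f x l Hd Hl) as [e [He H]].
    assert (Rmin e d <= d) by apply Rmin_r.
    assert (Rmin e d <= e) by apply Rmin_l.
    assert (0 < Rmin e d) by (apply Rmin_glb_lt; lra).
    destruct (H (Rmin e d / 2)) as [_ H5]. lra.
    specialize (Hm (x - Rmin e d / 2) ltac:(lra)). lra.
  - destruct (deriv_pos_local f x l Hd Hl) as [e [He H]].
    assert (Rmin e d <= d) by apply Rmin_r.
    assert (Rmin e d <= e) by apply Rmin_l.
    assert (0 < Rmin e d) by (apply Rmin_glb_lt; lra).
    destruct (H (Rmin e d / 2)) as [H5 _]. lra.
    specialize (Hm (x + Rmin e d / 2) ltac:(lra)). lra.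
Qed.

End File1.

Section File2.

Definition Phi (p s : R) := - s^2/2 + Rpower s p / p.
Definition qf (p s : R) := Rpower s (p-2) / p - 1/2.

Lemma rpow_pos x y : 0 < Rpower x y.
Proof. unfold Rpower; apply exp_pos. Qed.

Lemma rpow_one_l y : Rpower 1 y = 1.
Proof. unfold Rpower; rewrite ln_1, Rmult_0_r, exp_0; auto. Qed.

Lemma rp2 s : 0 < s -> Rpower s 2 = s^2.
Proof. intros Hs. rewrite <- (Rpower_pow 2 s Hs). f_equal. Qed.

Lemma rpm1 p s : 0 < s -> Rpower s (p-1) = s * Rpower s (p-2).
Proof.
  intros Hs. replace (p-1) with (1 + (p-2)) by ring.
  rewrite Rpower_plus, Rpower_1; auto.
Qed.

Lemma rpp p s : 0 < s -> Rpower s p = s^2 * Rpower s (p-2).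
Proof.
  intros Hs. replace p with (2 + (p-2)) at 1 by ring.
  rewrite Rpower_plus, rp2; auto.
Qed.

Lemma Phi_q p s : 0 < s -> Phi p s = s^2 * qf p s.
Proof.
  intros Hs. unfold Phi, qf. rewrite rpp; auto.
  destruct (Req_dec p 0) as [->|Hp]. unfold Rdiv; rewrite Rinv_0; ring. field; auto.
Qed.

Lemma qf_lt p s t : 2 < p -> 0 < s < t -> qf p s < qf p t.
Proof.
  intros Hp Hst. unfold qf.
  assert (Rpower s (p-2) < Rpower t (p-2)) by (apply Rlt_Rpower_l; lra).
  assert (0 < /p) by (apply Rinv_0_lt_compat; lra).
  unfold Rdiv. nra.
Qed.

Lemma qf_le p s t : 2 < p -> 0 < s <= t -> qf p s <= qf p t.
Proof.
  intros Hp Hst. destruct (Req_dec s t) as [->|]; [lra|]. left; apply qf_lt; lra.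
Qed.

Lemma Phi_ge p s : 2 < p -> 0 < s -> - s^2/2 <= Phi p s.
Proof.
  intros Hp Hs. unfold Phi. assert (0 < Rpower s p) by apply rpow_pos.
  assert (0 < Rpower s p / p) by (apply Rdiv_lt_0_compat; lra). lra.
Qed.

Lemma d_Phi p s : 2 < p -> 0 < s -> is_derive (Phi p) s (- s + Rpower s (p-1)).
Proof.
  intros Hp Hs. unfold Phi.
  apply d_ext with (f := fun y => (-/2) * (y ^ 2) + /p * Rpower y p).
  intros; field; lra.
  eapply d_eq. apply d_plus. apply d_scal. apply d_sqr. apply d_id.
  apply d_scal. apply d_rpow; auto. cbv beta. field. lra.
Qed.

Section W0facts.
Variables (p W0 : R).
Hypothesis Hp : 2 < p.
Hypothesis HW0 : 0 < W0.
Hypothesis HPW0 : Phi p W0 = 0.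

Lemma qW0 : qf p W0 = 0.
Proof.
  rewrite Phi_q in HPW0; auto. assert (0 < W0^2) by (apply pow_lt; auto). nra.
Qed.

Lemma rW0 : Rpower W0 (p-2) = p/2.
Proof. assert (H := qW0). unfold qf in H. field_simplify in H; [|lra].
  assert (Rpower W0 (p-2) * 2 = p) by (apply (f_equal (fun z => z * p)) in H; field_simplify in H; lra).
  lra.
Qed.

Lemma W0_gt1 : 1 < W0.
Proof.
  destruct (Rlt_or_le 1 W0) as [|H]; auto.
  exfalso. assert (H1 : qf p 1 = 1/p - 1/2) by (unfold qf; rewrite rpow_one_l; auto).
  assert (1/p < 1/2). { apply Rmult_lt_reg_r with (2*p). lra. field_simplify; lra. }
  assert (qf p W0 <= qf p 1) by (apply qf_le; lra). rewrite qW0 in *. lra.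
Qed.

Lemma Phi_nonneg_ge s : 0 < s -> 0 <= Phi p s -> W0 <= s.
Proof.
  intros Hs H. destruct (Rlt_or_le s W0) as [Hl|]; auto. exfalso.
  assert (qf p s < qf p W0) by (apply qf_lt; lra). rewrite qW0 in H0.
  rewrite Phi_q in H; auto. assert (0 < s^2) by (apply pow_lt; auto). nra.
Qed.

Lemma qf_nonneg s : W0 <= s -> 0 <= qf p s.
Proof. intros; rewrite <- qW0; apply qf_le; lra. Qed.

Lemma Phi_pos s : W0 < s -> 0 < Phi p s.
Proof.
  intros H. rewrite Phi_q by lra. assert (qf p W0 < qf p s) by (apply qf_lt; lra).
  rewrite qW0 in H0. assert (0 < s^2) by (apply pow_lt; lra). nra.
Qed.

Lemma Phi_mono s t : W0 <= s <= t -> Phi p s <= Phi p t.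
Proof.
  intros H. rewrite !Phi_q by lra.
  assert (qf p s <= qf p t) by (apply qf_le; lra).
  assert (0 <= qf p s) by (apply qf_nonneg; lra).
  assert (s^2 <= t^2) by (apply pow_incr; lra).
  assert (0 <= s^2) by (apply pow2_ge_0). nra.
Qed.

Lemma force_neg s : W0 <= s -> s - Rpower s (p-1) <= s * (1 - p/2).
Proof.
  intros H. rewrite rpm1 by lra.
  assert (Rpower W0 (p-2) <= Rpower s (p-2)) by (apply Rle_Rpower_l; lra).
  rewrite rW0 in H0. nra.
Qed.

Lemma h_lemma s M : 0 < s <= M -> 0 <= Phi p M ->
  (M - s) * (Phi p M / M) <= Phi p M - Phi p s.
Proof.
  intros Hs HM. rewrite !Phi_q by lra.
  assert (W0 <= M) by (apply Phi_nonneg_ge; lra).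
  assert (0 <= qf p M) by (apply qf_nonneg; lra).
  replace ((M - s) * (M ^ 2 * qf p M / M)) with ((M - s) * M * qf p M) by (field; lra).
  destruct (Rle_or_lt (qf p s) 0).
  - assert (0 <= s^2) by apply pow2_ge_0. 
    assert (s^2 * qf p s <= 0) by nra.
    assert ((M - s) * M * qf p M <= M^2 * qf p M - s * M * qf p M) by nra.
    assert (0 <= s * M * qf p M). { apply Rmult_le_pos; nra. } nra.
  - assert (qf p s <= qf p M) by (apply qf_le; lra).
    (* M^2 qM - s^2 qs >= M^2 qM - s M qM = (M - s) M qM *)
    assert (s^2 * qf p s <= s * M * qf p M).
    { assert (s * qf p s <= M * qf p M) by nra. nra. }
    nra.
Qed.
End W0facts.

Definition delta0 (p : R) := Rpower (1/2) (1/(p-2)).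

Lemma delta0_pos p : 0 < delta0 p.
Proof. apply rpow_pos. Qed.

Lemma small_lemma p s : 2 < p -> 0 < s <= delta0 p -> s^2/4 <= - 2 * Phi p s.
Proof.
  intros Hp Hs. unfold Phi. rewrite rpp by lra.
  assert (Rpower s (p-2) <= Rpower (delta0 p) (p-2)) by (apply Rle_Rpower_l; lra).
  unfold delta0 in H. rewrite Rpower_mult in H.
  replace (1/(p-2) * (p-2)) with 1 in H by (field; lra). rewrite Rpower_1 in H by lra.
  assert (0 < s^2) by (apply pow_lt; lra).
  assert (0 < Rpower s (p-2)) by apply rpow_pos.
  assert (s ^ 2 * Rpower s (p - 2) / p <= s^2 / 4).
  { apply Rmult_le_reg_r with p. lra. field_simplify; try lra. nra. }
  lra.
Qed.

End File2.

Section File3.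
Implicit Types (f : R -> R).

Definition En (p : R) (v v1 : R -> R) (r : R) := v1 r ^ 2 / 2 + Phi p (v r).

Definition half (p : R) (v v1 v2 c : R -> R) (b M : R) : Prop :=
  0 < b /\ v 0 = M /\ v1 0 = 0 /\
  (forall r, 0 <= r < b -> is_derive v r (v1 r) /\ is_derive v1 r (v2 r) /\ 0 < v r /\
      v2 r = v r - Rpower (v r) (p-1) - c r * v1 r) /\
  (forall r, 0 < r < b -> v r < M) /\
  (forall g, 0 < g -> exists d, 0 < d /\ forall r, b - d < r < b -> v r < g).

Lemma deriv_cont_eps f x l : is_derive f x l -> forall eps, 0 < eps ->
  exists d, 0 < d /\ forall y, Rabs (y - x) < d -> Rabs (f y - f x) < eps.
Proof.
  intros Hd eps He. apply is_derive_Reals in Hd.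
  destruct (Hd 1 ltac:(lra)) as [del Hdel].
  assert (0 < del) by apply cond_pos.
  assert (HA : 0 < Rabs l + 1) by (assert (0 <= Rabs l) by apply Rabs_pos; lra).
  exists (Rmin del (eps / (Rabs l + 1))). split.
  apply Rmin_glb_lt; auto. apply Rdiv_lt_0_compat; lra.
  intros y Hy.
  assert (Hy1 : Rabs (y - x) < del) by (eapply Rlt_le_trans; [exact Hy| apply Rmin_l]).
  assert (Hy2 : Rabs (y - x) < eps / (Rabs l + 1)) by (eapply Rlt_le_trans; [exact Hy| apply Rmin_r]).
  destruct (Req_dec y x) as [->|Hne].
  - unfold Rminus; rewrite Rplus_opp_r, Rabs_R0; auto.
  - specialize (Hdel (y - x) ltac:(lra) Hy1). replace (x + (y - x)) with y in Hdel by ring.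
    assert (Hq : Rabs ((f y - f x) / (y - x)) < Rabs l + 1).
    { assert (H1 := Rabs_triang_inv ((f y - f x) / (y - x)) l).
      lra. }
    assert (f y - f x = ((f y - f x) / (y - x)) * (y - x)) by (field; lra).
    rewrite H0, Rabs_mult.
    assert (0 <= Rabs ((f y - f x) / (y - x))) by apply Rabs_pos.
    assert (0 <= Rabs (y - x)) by apply Rabs_pos.
    apply Rle_lt_trans with ((Rabs l + 1) * Rabs (y - x)). nra.
    apply Rmult_lt_reg_r with (/ (Rabs l + 1)). apply Rinv_0_lt_compat; lra.
    replace ((Rabs l + 1) * Rabs (y - x) * / (Rabs l + 1)) with (Rabs (y - x)) by (field; lra).
    exact Hy2.
Qed.

Section Half.
Variables (p W0 : R) (v v1 v2 c : R -> R) (b M : R).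
Hypothesis Hp : 2 < p.
Hypothesis HW0 : 0 < W0.
Hypothesis HPW0 : Phi p W0 = 0.
Hypothesis H : half p v v1 v2 c b M.

Lemma h_b : 0 < b. Proof. apply H. Qed.
Lemma h_v0 : v 0 = M. Proof. apply H. Qed.
Lemma h_v10 : v1 0 = 0. Proof. apply H. Qed.
Lemma h_d r : 0 <= r < b -> is_derive v r (v1 r). Proof. intros; apply H; auto. Qed.
Lemma h_d1 r : 0 <= r < b -> is_derive v1 r (v2 r). Proof. intros; apply H; auto. Qed.
Lemma h_pos r : 0 <= r < b -> 0 < v r. Proof. intros; apply H; auto. Qed.
Lemma h_ode r : 0 <= r < b -> v2 r = v r - Rpower (v r) (p-1) - c r * v1 r.
Proof. intros; apply H; auto. Qed.
Lemma h_ltM r : 0 < r < b -> v r < M. Proof. intros; apply H; auto. Qed.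
Lemma h_leM r : 0 <= r < b -> v r <= M.
Proof. intros Hr. destruct (Req_dec r 0) as [->|]. rewrite h_v0; lra. left; apply h_ltM; lra. Qed.
Lemma h_lim g : 0 < g -> exists d, 0 < d /\ forall r, b - d < r < b -> v r < g.
Proof. apply H. Qed.
Lemma h_Mpos : 0 < M.
Proof. rewrite <- h_v0. apply h_pos. split; [lra|apply h_b]. Qed.

Lemma En_deriv r : 0 <= r < b -> is_derive (En p v v1) r (- c r * v1 r ^ 2).
Proof.
  intros Hr. unfold En.
  assert (Hv := h_pos r Hr).
  eapply d_eq. apply d_plus.
  apply d_ext with (f := fun y => /2 * (v1 y ^ 2)). intros; field.
  apply d_scal, d_sqr, h_d1; auto.
  apply d_comp. apply d_Phi; auto. apply h_d; auto.
  rewrite h_ode; auto. field.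
Qed.

Lemma near_b r g : 0 <= r < b -> 0 < g -> exists t, r <= t < b /\ v t < g.
Proof.
  intros Hr Hg. destruct (h_lim g Hg) as [d [Hd Hv]].
  exists (Rmax r (b - d/2)). split. split. apply Rmax_l.
  apply Rmax_lub_lt; lra.
  apply Hv. split. apply Rlt_le_trans with (b - d/2). lra. apply Rmax_r.
  apply Rmax_lub_lt; lra.
Qed.

Lemma crit_neg s : 0 <= s < b -> v1 s = 0 -> 0 <= En p v v1 s -> v2 s < 0.
Proof.
  intros Hs H1 HE. unfold En in HE. rewrite H1 in HE.
  replace (0 ^ 2 / 2) with 0 in HE by (simpl; field). rewrite Rplus_0_l in HE.
  assert (Hv := h_pos s Hs).
  assert (W0 <= v s) by (eapply Phi_nonneg_ge; eauto).
  rewrite h_ode, H1 by auto.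
  assert (F := force_neg p W0 Hp HW0 HPW0 (v s) H0).
  assert (0 < v s * (p/2 - 1)) by (apply Rmult_lt_0_compat; lra).
  lra.
Qed.

Lemma mono_lemma : (forall r, 0 <= r < b -> 0 <= En p v v1 r) ->
  forall r, 0 < r < b -> v1 r < 0.
Proof.
  intros HE s Hs.
  destruct (Rlt_or_le (v1 s) 0) as [|Hs1]; auto. exfalso.
  assert (Hb := h_b).
  assert (H0b : 0 <= 0 < b) by lra.
  assert (Hv20 : v2 0 < 0) by (apply crit_neg; auto; apply h_v10).
  destruct (deriv_neg_local v1 0 (v2 0) (h_d1 0 H0b) Hv20) as [d0 [Hd0 Hloc]].
  set (t0 := Rmin (d0/2) (s/2)).
  assert (Ht0a : t0 <= d0/2) by apply Rmin_l.
  assert (Ht0b : t0 <= s/2) by apply Rmin_r.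
  assert (Ht0c : 0 < t0) by (apply Rmin_glb_lt; lra).
  assert (Hvt0 : v1 t0 < 0).
  { destruct (Hloc t0 ltac:(lra)) as [A _]. rewrite Rplus_0_l, h_v10 in A. auto. }
  set (E := fun x => t0 <= x <= s /\ forall y, t0 <= y <= x -> v1 y < 0).
  assert (HEb : bound E). { exists s. intros x [Hx _]. lra. }
  assert (HEn : exists x, E x).
  { exists t0. split. lra. intros y Hy. replace y with t0 by lra. auto. }
  destruct (completeness E HEb HEn) as [gl [Hub Hlub]].
  assert (Hg1 : t0 <= gl) by (apply Hub; split; [lra| intros y Hy; replace y with t0 by lra; auto]).
  assert (Hg2 : gl <= s) by (apply Hlub; intros x [Hx _]; lra).
  assert (ClA : forall y, t0 <= y < gl -> v1 y < 0).
  { intros y Hy. destruct (Rlt_or_le y gl) as [_|]; [|lra].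
    destruct (Classical_Prop.classic (exists x, E x /\ y <= x)) as [[x [[Hx1 Hx2] Hyx]]|Hn].
    - apply Hx2. lra.
    - assert (gl <= y); [|lra]. apply Hlub. intros x Ex.
      destruct (Rle_or_lt x y); auto. exfalso; apply Hn; exists x; split; auto; lra. }
  assert (Hgb : 0 <= gl < b) by lra.
  destruct (Req_dec (v1 gl) 0) as [Hz|Hnz].
  - assert (Hv2g : v2 gl < 0) by (apply crit_neg; auto).
    destruct (deriv_neg_local v1 gl (v2 gl) (h_d1 gl Hgb) Hv2g) as [e [He Hl]].
    assert (Hgt : t0 < gl).
    { destruct (Req_dec t0 gl) as [Heq|]; [|lra]. rewrite <- Heq in Hz. lra. }
    set (h := Rmin (e/2) ((gl - t0)/2)).
    assert (h <= e/2) by apply Rmin_l. assert (h <= (gl - t0)/2) by apply Rmin_r.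
    assert (0 < h) by (apply Rmin_glb_lt; lra).
    destruct (Hl h ltac:(lra)) as [_ B]. rewrite Hz in B.
    assert (v1 (gl - h) < 0) by (apply ClA; lra). lra.
  - assert (Hap : 0 < Rabs (v1 gl)) by (apply Rabs_pos_lt; auto).
    destruct (deriv_cont_eps v1 gl (v2 gl) (h_d1 gl Hgb) (Rabs (v1 gl)/2) ltac:(lra)) as [dd [Hdd Hcont]].
    destruct (Rlt_or_le (v1 gl) 0) as [Hneg|Hpos].
    + (* v1 < 0 near gl: extend *)
      assert (Hgs : gl < s) by (destruct (Req_dec gl s) as [->|]; lra).
      set (x := Rmin (gl + dd/2) s).
      assert (x <= gl + dd/2) by apply Rmin_l. assert (x <= s) by apply Rmin_r.
      assert (gl < x) by (apply Rmin_glb_lt; lra).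
      assert (Ex : E x).
      { split. lra. intros y Hy. destruct (Rlt_or_le y gl). apply ClA; lra.
        assert (Hyd : Rabs (y - gl) < dd) by (rewrite Rabs_pos_eq; lra).
        specialize (Hcont y Hyd). rewrite (Rabs_left (v1 gl)) in Hcont by lra.
        apply Rabs_def2 in Hcont. lra. }
      specialize (Hub x Ex). lra.
    + assert (Hgt : t0 < gl).
      { destruct (Req_dec t0 gl) as [Heq|]; [|lra]. rewrite <- Heq in Hpos. lra. }
      set (y := Rmax t0 (gl - dd/2)).
      assert (t0 <= y) by apply Rmax_l. assert (gl - dd/2 <= y) by apply Rmax_r.
      assert (y < gl) by (apply Rmax_lub_lt; lra).
      assert (Hyd : Rabs (y - gl) < dd) by (rewrite Rabs_left; lra).
      specialize (Hcont y Hyd). rewrite (Rabs_pos_eq (v1 gl)) in Hcont by lra.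
      apply Rabs_def2 in Hcont.
      assert (v1 y < 0) by (apply ClA; lra). lra.
Qed.

Lemma time_lemma Hc : 0 < Hc ->
  (forall r, 0 < r < b -> v1 r < 0) ->
  (forall r, 0 < r < b -> (M - v r) * Hc <= v1 r ^ 2) ->
  b <= 2 * sqrt M / sqrt Hc.
Proof.
  intros HH Hneg Hsq.
  assert (Hb := h_b). assert (HM := h_Mpos).
  assert (Hsh : 0 < sqrt Hc) by (apply sqrt_lt_R0; auto).
  set (G := fun r => sqrt (M - v r)).
  assert (HG : forall r1 r2, 0 < r1 <= r2 -> r2 < b -> G r2 - G r1 >= (r2 - r1) * (sqrt Hc / 2)).
  { intros r1 r2 Hr1 Hr2.
    assert (Hm := mvt_incr (fun r => G r - sqrt Hc / 2 * r)
       (fun r => (- v1 r * / (2 * sqrt (M - v r))) - sqrt Hc / 2) r1 r2 ltac:(lra)).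
    assert (G r1 - sqrt Hc / 2 * r1 <= G r2 - sqrt Hc / 2 * r2); [|lra].
    apply Hm.
    - intros x Hx. apply d_minus.
      + unfold G. eapply d_eq. apply d_comp.
        apply is_derive_Reals, derivable_pt_lim_sqrt.
        assert (v x < M) by (apply h_ltM; lra). lra.
        apply d_minus. apply d_const. apply h_d; lra. ring.
      + eapply d_eq. apply d_scal, d_id. ring.
    - intros x Hx.
      assert (Hvx : v x < M) by (apply h_ltM; lra).
      assert (Hs1 : 0 < sqrt (M - v x)) by (apply sqrt_lt_R0; lra).
      assert (Hv1 := Hneg x ltac:(lra)).
      assert (Hq := Hsq x ltac:(lra)).
      assert (Hk : sqrt (M - v x) * sqrt Hc <= - v1 x).
      { rewrite <- sqrt_mult by lra.
        rewrite <- (sqrt_pow2 (- v1 x)) by lra.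
        apply sqrt_le_1_alt. replace ((- v1 x)^2) with (v1 x ^ 2) by ring. lra. }
      assert (- v1 x * / (2 * sqrt (M - v x)) >= sqrt Hc / 2).
      { apply Rle_ge. apply Rmult_le_reg_r with (2 * sqrt (M - v x)). lra.
        rewrite Rmult_assoc, Rinv_l by lra. lra. }
      lra. }
  assert (HGb : forall r, 0 < r < b -> 0 <= G r <= sqrt M).
  { intros r Hr. unfold G. split. apply sqrt_pos. apply sqrt_le_1_alt.
    assert (0 < v r) by (apply h_pos; lra). lra. }
  set (T := 2 * sqrt M / sqrt Hc).
  destruct (Rle_or_lt b T) as [|HbT]; auto. exfalso.
  set (e := Rmin ((b - T)/3) (b/3)).
  assert (e <= (b - T)/3) by apply Rmin_l. assert (e <= b/3) by apply Rmin_r.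
  assert (0 < T) by (unfold T; apply Rdiv_lt_0_compat; [assert (0 < sqrt M) by (apply sqrt_lt_R0; lra); lra|lra]).
  assert (0 < e) by (apply Rmin_glb_lt; lra).
  specialize (HG e (b - e) ltac:(lra) ltac:(lra)).
  destruct (HGb e ltac:(lra)). destruct (HGb (b - e) ltac:(lra)).
  assert ((b - e - e) * (sqrt Hc / 2) <= sqrt M) by lra.
  assert (T * (sqrt Hc / 2) = sqrt M) by (unfold T; field; lra).
  assert (T < b - e - e) by lra.
  nra.
Qed.

Lemma lower_lemma dl : 0 <= dl ->
  (forall r, 0 <= r < b -> v1 r ^ 2 <= 2 * dl + v r ^ 2) ->
  M <= sqrt (2 * dl) * exp b.
Proof.
  intros Hdl Hsq.
  assert (Hb := h_b). assert (HM := h_Mpos).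
  set (s := sqrt (2 * dl)).
  assert (Hs0 : 0 <= s) by apply sqrt_pos.
  assert (Hs2 : s * s = 2 * dl) by (apply sqrt_sqrt; lra).
  assert (HZ : forall r, 0 <= r < b -> M + s <= (v r + s) * exp r).
  { intros r Hr.
    assert (Hm' : (v 0 + s) * exp 0 <= (v r + s) * exp r).
    2: rewrite exp_0, h_v0, Rmult_1_r in Hm'; exact Hm'.
    apply (mvt_incr (fun y => (v y + s) * exp y) (fun y => (v1 y + (v y + s)) * exp y) 0 r); [lra| |].
    - intros x Hx. eapply d_eq. apply d_mult. apply d_plus. apply h_d; lra. apply d_const.
      apply d_exp. cbv beta; ring.
    - intros x Hx. apply Rmult_le_pos; [|left; apply exp_pos].
      assert (Hq := Hsq x ltac:(lra)). assert (0 < v x) by (apply h_pos; lra).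
      nra. }
  destruct (Rle_or_lt M (s * exp b)) as [|Hlt]; auto. exfalso.
  assert (Heb : 0 < exp b) by apply exp_pos.
  set (g := (M - s * exp b) / (2 * exp b)).
  assert (0 < g) by (unfold g; apply Rdiv_lt_0_compat; lra).
  destruct (near_b 0 g ltac:(lra) H0) as [t [Ht Hvt]].
  specialize (HZ t Ht).
  assert (exp t <= exp b) by (left; apply exp_increasing; lra).
  assert (0 < v t) by (apply h_pos; lra).
  assert ((v t + s) * exp t <= (g + s) * exp b).
  { apply Rle_trans with ((v t + s) * exp b). apply Rmult_le_compat_l; lra.
    apply Rmult_le_compat_r; lra. }
  assert ((g + s) * exp b = (M + s * exp b) / 2) by (unfold g; field; lra).
  lra.
Qed.
End Half.

End File3.

Section File4.

Section Half2.
Variables (p W0 : R) (v v1 v2 c : R -> R) (b M : R).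
Hypothesis Hp : 2 < p.
Hypothesis HW0 : 0 < W0.
Hypothesis HPW0 : Phi p W0 = 0.
Hypothesis H : half p v v1 v2 c b M.

Notation E := (En p v v1).

Lemma E0_eq : E 0 = Phi p M.
Proof. unfold En. rewrite (h_v10 _ _ _ _ _ _ _ H), (h_v0 _ _ _ _ _ _ _ H). field. Qed.

Lemma dec_E_mono : (forall r, 0 <= r < b -> 0 <= c r) ->
  forall r1 r2, 0 <= r1 <= r2 -> r2 < b -> E r2 <= E r1.
Proof.
  intros Hc r1 r2 H12 H2.
  apply (mvt_decr E (fun r => - c r * v1 r ^ 2) r1 r2); [lra| |].
  intros x Hx; apply (En_deriv p v v1 v2 c b M Hp H); lra.
  intros x Hx. assert (0 <= c x) by (apply Hc; lra).
  assert (0 <= v1 x ^ 2) by apply pow2_ge_0. nra.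
Qed.

Lemma dec_E_ge0 : (forall r, 0 <= r < b -> 0 <= c r) ->
  forall r, 0 <= r < b -> 0 <= E r.
Proof.
  intros Hc r Hr. destruct (Rle_or_lt 0 (E r)) as [|Hneg]; auto. exfalso.
  set (g := sqrt (- E r)).
  assert (Hg : 0 < g) by (apply sqrt_lt_R0; lra).
  assert (Hg2 : g * g = - E r) by (apply sqrt_sqrt; lra).
  destruct (near_b p v v1 v2 c b M H r g Hr Hg) as [t [Ht Hvt]].
  assert (E t <= E r) by (apply dec_E_mono; auto; lra).
  assert (Hv := h_pos _ _ _ _ _ _ _ H t ltac:(lra)).
  assert (- (v t)^2/2 <= Phi p (v t)) by (apply Phi_ge; auto).
  assert (Phi p (v t) <= E t) by (unfold En; assert (0 <= v1 t ^ 2) by apply pow2_ge_0; lra).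
  assert (v t ^ 2 < g * g) by nra.
  lra.
Qed.

Lemma E_Phi_bound r : 0 <= r < b -> v1 r ^ 2 <= 2 * E r + v r ^ 2.
Proof.
  intros Hr. assert (Hv := h_pos _ _ _ _ _ _ _ H r Hr).
  assert (- (v r)^2/2 <= Phi p (v r)) by (apply Phi_ge; auto).
  unfold En. lra.
Qed.

Lemma dec_E_lower beta : (forall r, 0 <= r < b -> 0 <= c r <= beta) ->
  (forall r, 0 < r < b -> v1 r < 0) ->
  forall r, 0 <= r < b ->
  E 0 - beta * sqrt (2 * E 0 + M ^ 2) * (M - v r) <= E r.
Proof.
  intros Hc Hneg r Hr.
  set (K := sqrt (2 * E 0 + M ^ 2)).
  assert (Hc0 : forall r, 0 <= r < b -> 0 <= c r) by (intros; apply Hc; auto).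
  assert (HE0 : 0 <= E 0) by (apply dec_E_ge0; auto; split; [lra|apply (h_b _ _ _ _ _ _ _ H)]).
  assert (Hnp : forall x, 0 <= x < b -> v1 x <= 0).
  { intros x Hx. destruct (Req_dec x 0) as [->|]. rewrite (h_v10 _ _ _ _ _ _ _ H); lra.
    left; apply Hneg; lra. }
  assert (HK : forall x, 0 <= x < b -> - v1 x <= K).
  { intros x Hx. unfold K. rewrite <- (sqrt_pow2 (- v1 x)) by (specialize (Hnp x Hx); lra).
    apply sqrt_le_1_alt.
    assert (v1 x ^ 2 <= 2 * E x + v x ^ 2) by (apply E_Phi_bound; auto).
    assert (E x <= E 0) by (apply dec_E_mono; auto; lra).
    assert (v x <= M) by (apply (h_leM _ _ _ _ _ _ _ H); auto).
    assert (0 < v x) by (apply (h_pos _ _ _ _ _ _ _ H); auto).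
    assert (v x ^ 2 <= M ^ 2) by (apply pow_incr; lra).
    replace ((- v1 x)^2) with (v1 x ^ 2) by ring. lra. }
  assert (Hm : E 0 - beta * K * v 0 <= E r - beta * K * v r).
  { apply (mvt_incr (fun y => E y - beta * K * v y) (fun y => - c y * v1 y ^ 2 - beta * K * v1 y) 0 r); [lra| |].
    - intros x Hx. apply d_minus. apply (En_deriv p v v1 v2 c b M Hp H); lra.
      apply d_scal. apply (h_d _ _ _ _ _ _ _ H); lra.
    - intros x Hx. assert (Hx' : 0 <= x < b) by lra.
      specialize (Hc x Hx'). specialize (HK x Hx'). specialize (Hnp x Hx').
      assert (beta * (- v1 x) * (- v1 x) <= beta * K * (- v1 x)).
      { apply Rmult_le_compat_r. lra. apply Rmult_le_compat_l; lra. }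
      assert (c x * (v1 x * v1 x) <= beta * (v1 x * v1 x)).
      { apply Rmult_le_compat_r. nra. lra. }
      simpl. nra. }
  rewrite (h_v0 _ _ _ _ _ _ _ H) in Hm. fold K. nra.
Qed.

Lemma inc_E_ge : (forall r, 0 <= r < b -> c r <= 0) ->
  forall r, 0 <= r < b -> E 0 <= E r.
Proof.
  intros Hc r Hr.
  apply (mvt_incr E (fun r => - c r * v1 r ^ 2) 0 r); [lra| |].
  intros x Hx; apply (En_deriv p v v1 v2 c b M Hp H); lra.
  intros x Hx. assert (c x <= 0) by (apply Hc; lra).
  assert (0 <= v1 x ^ 2) by apply pow2_ge_0. nra.
Qed.

Lemma inc_E_upper beta : 0 <= beta -> (forall r, 0 <= r < b -> - beta <= c r <= 0) ->
  forall r, 0 <= r < b -> 2 * E r + M ^ 2 <= (2 * E 0 + M ^ 2) * exp (2 * beta * r).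
Proof.
  intros Hb0 Hc r Hr.
  assert (Hm : (2 * E r + M ^ 2) * exp (- (2 * beta) * r) <= (2 * E 0 + M ^ 2) * exp (- (2 * beta) * 0)).
  { apply (mvt_decr (fun y => (2 * E y + M ^ 2) * exp (- (2 * beta) * y))
       (fun y => (2 * (- c y * v1 y ^ 2)) * exp (- (2 * beta) * y)
                 + (2 * E y + M ^ 2) * ((- (2 * beta) * 1) * exp (- (2 * beta) * y))) 0 r); [lra| |].
    - intros x Hx. eapply d_eq. apply d_mult. apply d_plus. apply d_scal.
      apply (En_deriv p v v1 v2 c b M Hp H); lra. apply d_const.
      apply (d_comp exp (fun y => - (2 * beta) * y)). apply d_exp. apply d_scal, d_id.
      cbv beta. ring.
    - intros x Hx. assert (Hx' : 0 <= x < b) by lra.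
      assert (Hq := E_Phi_bound x Hx').
      assert (v x <= M) by (apply (h_leM _ _ _ _ _ _ _ H); auto).
      assert (0 < v x) by (apply (h_pos _ _ _ _ _ _ _ H); auto).
      assert (v x ^ 2 <= M ^ 2) by (apply pow_incr; lra).
      specialize (Hc x Hx').
      assert (Hex : 0 < exp (- (2 * beta) * x)) by apply exp_pos.
      assert (- c x * v1 x ^ 2 <= beta * (2 * E x + M ^ 2)).
      { assert (0 <= v1 x ^ 2) by apply pow2_ge_0. nra. }
      assert (2 * (- c x * v1 x ^ 2) + (2 * E x + M ^ 2) * (- (2 * beta) * 1) <= 0) by lra.
      nra. }
  rewrite Rmult_0_r, exp_0, Rmult_1_r in Hm.
  assert (Hex : exp (- (2 * beta) * r) * exp (2 * beta * r) = 1).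
  { rewrite <- exp_plus. replace (- (2 * beta) * r + 2 * beta * r) with 0 by ring. apply exp_0. }
  assert (0 < exp (2 * beta * r)) by apply exp_pos.
  apply Rmult_le_compat_r with (r := exp (2 * beta * r)) in Hm; [|lra].
  rewrite Rmult_assoc, Hex, Rmult_1_r in Hm. exact Hm.
Qed.

Lemma tail_lemma : (forall r, 0 < r < b -> v1 r < 0) ->
  (forall r, 0 <= r < b -> 0 <= E r) ->
  forall R0, 0 < R0 < b -> v R0 <= delta0 p ->
  forall r, R0 <= r < b -> v r <= v R0 * exp (- (r - R0) / 2).
Proof.
  intros Hneg HE R0 HR HvR r Hr.
  assert (Hdec : forall x, R0 <= x < b -> v x <= v R0).
  { intros x Hx. apply (mvt_decr v v1 R0 x); [lra| |].
    intros y Hy; apply (h_d _ _ _ _ _ _ _ H); lra.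
    intros y Hy; left; apply Hneg; lra. }
  assert (Hm : v r * exp (r / 2) <= v R0 * exp (R0 / 2)).
  { apply (mvt_decr (fun y => v y * exp (y / 2)) (fun y => v1 y * exp (y/2) + v y * ((/2 * 1) * exp (y/2))) R0 r); [lra| |].
    - intros x Hx. eapply d_eq. apply (d_mult v (fun y => exp (y / 2))). apply (h_d _ _ _ _ _ _ _ H); lra.
      apply (d_comp exp (fun y => y / 2)). apply d_exp.
      apply d_ext with (f := fun y => / 2 * y). intros; field. apply d_scal, d_id.
      cbv beta; ring.
    - intros x Hx. assert (Hx' : 0 <= x < b) by lra.
      assert (Hvx : 0 < v x) by (apply (h_pos _ _ _ _ _ _ _ H); auto).
      assert (v x <= delta0 p) by (specialize (Hdec x ltac:(lra)); lra).
      assert (Hs := small_lemma p (v x) Hp ltac:(lra)).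
      specialize (HE x Hx'). unfold En in HE.
      assert (Hv1 := Hneg x ltac:(lra)).
      assert (v1 x <= - v x / 2) by nra.
      assert (0 < exp (x/2)) by apply exp_pos.
      nra. }
  assert (Hex : exp (r / 2) * exp (- (r - R0) / 2) = exp (R0 / 2)).
  { rewrite <- exp_plus. f_equal. field. }
  assert (0 < exp (- (r - R0) / 2)) by apply exp_pos.
  apply Rmult_le_compat_r with (r := exp (- (r - R0) / 2)) in Hm; [|lra].
  rewrite Rmult_assoc, Hex in Hm.
  assert (0 < exp (R0/2)) by apply exp_pos.
  assert (0 < v R0) by (apply (h_pos _ _ _ _ _ _ _ H); lra).
  apply Rmult_le_reg_r with (exp (R0/2)); auto. nra.
Qed.
End Half2.

End File4.

Section File5.

Lemma lip_one p B x y : 2 < p -> 0 < x <= y -> y <= B ->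
  0 <= Rpower y (p-1) - Rpower x (p-1) <= (p-1) * Rpower B (p-2) * (y - x).
Proof.
  intros Hp Hxy HyB. split.
  - assert (Rpower x (p-1) <= Rpower y (p-1)) by (apply Rle_Rpower_l; lra). lra.
  - apply (mvt_bound (fun z => Rpower z (p-1)) (fun z => (p-1) * Rpower z (p-1-1)) x y); [lra| |].
    + intros z Hz. apply d_rpow. lra.
    + intros z Hz. replace (p-1-1) with (p-2) by ring.
      apply Rmult_le_compat_l. lra. apply Rle_Rpower_l; lra.
Qed.

Lemma lip p B x y : 2 < p -> 0 < x <= B -> 0 < y <= B ->
  Rabs (Rpower x (p-1) - Rpower y (p-1)) <= (p-1) * Rpower B (p-2) * Rabs (x - y).
Proof.
  intros Hp Hx Hy. destruct (Rle_or_lt x y).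
  - destruct (lip_one p B x y Hp ltac:(lra) ltac:(lra)).
    rewrite Rabs_minus_sym, (Rabs_minus_sym x y), !Rabs_pos_eq by lra. lra.
  - destruct (lip_one p B y x Hp ltac:(lra) ltac:(lra)).
    rewrite !Rabs_pos_eq by lra. lra.
Qed.

Lemma two_ab a b : 2 * Rabs a * Rabs b <= a ^ 2 + b ^ 2.
Proof.
  rewrite <- (pow2_abs a), <- (pow2_abs b).
  assert (0 <= (Rabs a - Rabs b)^2) by apply pow2_ge_0. nra.
Qed.

Lemma compare_lemma p (v v1 v2 c V V1 V2 : R -> R) L B beta :
  2 < p -> 0 <= beta -> 0 < B -> 0 <= L ->
  (forall r, 0 <= r <= L -> is_derive v r (v1 r) /\ is_derive v1 r (v2 r) /\
     0 < v r <= B /\ v2 r = v r - Rpower (v r) (p-1) - c r * v1 r /\ Rabs (c r) <= beta) ->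
  (forall r, 0 <= r <= L -> is_derive V r (V1 r) /\ is_derive V1 r (V2 r) /\
     0 < V r <= B /\ Rabs (V1 r) <= B /\ V2 r = V r - Rpower (V r) (p-1)) ->
  forall r, 0 <= r <= L ->
  (v r - V r) ^ 2 <= ((v 0 - V 0) ^ 2 + (v1 0 - V1 0) ^ 2 + beta * B ^ 2)
      * exp ((2 + (p-1) * Rpower B (p-2) + 3 * beta) * L).
Proof.
  intros Hp Hb HB HL Hv HV r Hr.
  set (Lp := (p-1) * Rpower B (p-2)).
  assert (HLp : 0 <= Lp) by (unfold Lp; assert (0 < Rpower B (p-2)) by apply rpow_pos; nra).
  set (k := 2 + Lp + 3 * beta).
  set (s := beta * B ^ 2).
  assert (Hs : 0 <= s) by (unfold s; assert (0 <= B^2) by apply pow2_ge_0; nra).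
  set (D := fun y => (v y - V y) ^ 2 + (v1 y - V1 y) ^ 2).
  set (dD := fun y => 2 * (v y - V y) * (v1 y - V1 y) + 2 * (v1 y - V1 y) * (v2 y - V2 y)).
  assert (HdD : forall y, 0 <= y <= L -> dD y <= k * D y + s).
  { intros y Hy. destruct (Hv y Hy) as [_ [_ [Hvy [Hode Hcy]]]].
    destruct (HV y Hy) as [_ [_ [HVy [HV1 HVode]]]].
    unfold dD, D. rewrite Hode, HVode.
    set (X := v y - V y). set (Y := v1 y - V1 y).
    set (P := Rpower (v y) (p-1) - Rpower (V y) (p-1)).
    assert (HP : Rabs P <= Lp * Rabs X) by (apply lip; lra).
    replace (2 * X * Y + 2 * Y * (v y - Rpower (v y) (p - 1) - c y * v1 y - (V y - Rpower (V y) (p - 1))))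
      with (4 * X * Y - 2 * Y * P - 2 * Y * (c y * v1 y)) by (unfold X, P; ring).
    assert (h1 : 4 * X * Y <= 2 * (X^2 + Y^2)) by (assert (0 <= (X - Y)^2) by apply pow2_ge_0; nra).
    assert (h2 : - 2 * Y * P <= Lp * (X^2 + Y^2)).
    { assert (- (Y * P) <= Rabs Y * Rabs P) by (rewrite <- Rabs_mult; rewrite <- Rabs_Ropp; apply Rle_abs).
      assert (Hxy := two_ab X Y).
      assert (Rabs Y * Rabs P <= Rabs Y * (Lp * Rabs X)) by (apply Rmult_le_compat_l; [apply Rabs_pos|auto]).
      nra. }
    assert (h3 : - 2 * Y * (c y * v1 y) <= 3 * beta * Y^2 + s).
    { assert (Hv1 : Rabs (v1 y) <= Rabs Y + B).
      { replace (v1 y) with (Y + V1 y) by (unfold Y; ring).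
        eapply Rle_trans. apply Rabs_triang. lra. }
      assert (- (Y * (c y * v1 y)) <= Rabs Y * (Rabs (c y) * Rabs (v1 y))).
      { rewrite <- !Rabs_mult. rewrite <- Rabs_Ropp. apply Rle_abs. }
      assert (HaY : 0 <= Rabs Y) by apply Rabs_pos.
      assert (Hac : 0 <= Rabs (c y)) by apply Rabs_pos.
      assert (Rabs (c y) * Rabs (v1 y) <= beta * (Rabs Y + B)).
      { apply Rmult_le_compat; auto. apply Rabs_pos. }
      assert (Rabs Y * (Rabs (c y) * Rabs (v1 y)) <= Rabs Y * (beta * (Rabs Y + B))) by
        (apply Rmult_le_compat_l; auto).
      assert (HYB := two_ab Y B). rewrite (Rabs_pos_eq B) in HYB by lra.
      assert (HYB2 : beta * (2 * Rabs Y * B) <= beta * (Y^2 + B^2)) by (apply Rmult_le_compat_l; lra).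
      assert (HY2 : Rabs Y ^ 2 = Y ^ 2) by apply pow2_abs.
      unfold s. nra. }
    unfold k. assert (0 <= X^2) by apply pow2_ge_0. assert (0 <= Y^2) by apply pow2_ge_0.
    nra. }
  assert (Hk : 1 <= k) by (unfold k; lra).
  assert (Hm : (D r + s) * exp (- k * r) <= (D 0 + s) * exp (- k * 0)).
  { apply (mvt_decr (fun y => (D y + s) * exp (- k * y))
      (fun y => (dD y + 0) * exp (- k * y) + (D y + s) * ((- k * 1) * exp (- k * y))) 0 r); [lra| |].
    - intros x Hx. assert (Hx' : 0 <= x <= L) by lra. destruct (Hv x Hx') as [Hd1 [Hd2 _]]. destruct (HV x Hx') as [Hd3 [Hd4 _]].
      apply (d_mult (fun y => D y + s) (fun y => exp (- k * y))).
      + apply d_plus; [|apply d_const]. unfold D, dD.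
        eapply d_eq. apply d_plus; apply d_sqr; apply d_minus; eauto. cbv beta; ring.
      + apply (d_comp exp (fun y => - k * y)). apply d_exp. apply d_scal, d_id.
    - intros x Hx. specialize (HdD x ltac:(lra)).
      assert (0 < exp (- k * x)) by apply exp_pos.
      assert (0 <= D x) by (unfold D; assert (0 <= (v x - V x)^2) by apply pow2_ge_0;
                            assert (0 <= (v1 x - V1 x)^2) by apply pow2_ge_0; lra).
      assert (Hq : dD x + 0 + (D x + s) * (- k * 1) <= 0) by nra.
      replace ((dD x + 0) * exp (- k * x) + (D x + s) * (- k * 1 * exp (- k * x)))
        with ((dD x + 0 + (D x + s) * (- k * 1)) * exp (- k * x)) by ring.
      nra. }
  rewrite Rmult_0_r, exp_0, Rmult_1_r in Hm.
  assert (Hex : exp (- k * r) * exp (k * r) = 1).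
  { rewrite <- exp_plus. replace (- k * r + k * r) with 0 by ring. apply exp_0. }
  assert (0 < exp (k * r)) by apply exp_pos.
  apply Rmult_le_compat_r with (r := exp (k * r)) in Hm; [|lra].
  rewrite Rmult_assoc, Hex, Rmult_1_r in Hm.
  assert (exp (k * r) <= exp (k * L)).
  { destruct (Req_dec r L) as [->|]; [lra|]. left; apply exp_increasing. nra. }
  assert (0 <= D 0 + s) by (unfold D; assert (0 <= (v 0 - V 0)^2) by apply pow2_ge_0;
                            assert (0 <= (v1 0 - V1 0)^2) by apply pow2_ge_0; lra).
  assert (0 <= (v1 r - V1 r)^2) by apply pow2_ge_0.
  assert (Hfin : (D 0 + s) * exp (k * r) <= (D 0 + s) * exp (k * L)) by (apply Rmult_le_compat_l; lra).
  assert (HDr : (v r - V r) ^ 2 <= D r) by (unfold D; lra).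
  change ((v r - V r) ^ 2 <= (D 0 + s) * exp (k * L)). lra.
Qed.

End File5.

Section File6.

Lemma const_of_deriv0 (f : R -> R) : (forall x, is_derive f x 0) -> forall x y, f x = f y.
Proof.
  intros Hd.
  assert (A : forall x y, x <= y -> f x = f y).
  { intros x y Hxy. apply Rle_antisym.
    apply (mvt_incr f (fun _ => 0) x y); auto; intros; lra.
    apply (mvt_decr f (fun _ => 0) x y); auto; intros; lra. }
  intros x y. destruct (Rle_or_lt x y). auto. symmetry; apply A; lra.
Qed.

Lemma is_lim_pinf_0 (W : R -> R) : is_lim W p_infty 0 ->
  forall eps, 0 < eps -> exists R0, forall x, R0 < x -> Rabs (W x) < eps.
Proof.
  intros Hl eps He. apply is_lim_spec in Hl. simpl in Hl.
  destruct (Hl (mkposreal eps He)) as [R0 HR]. exists R0. intros x Hx.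
  specialize (HR x Hx). simpl in HR. rewrite Rminus_0_r in HR. auto.
Qed.

Lemma is_lim_minf_0 (W : R -> R) : is_lim W m_infty 0 ->
  forall eps, 0 < eps -> exists R0, forall x, x < R0 -> Rabs (W x) < eps.
Proof.
  intros Hl eps He. apply is_lim_spec in Hl. simpl in Hl.
  destruct (Hl (mkposreal eps He)) as [R0 HR]. exists R0. intros x Hx.
  specialize (HR x Hx). simpl in HR. rewrite Rminus_0_r in HR. auto.
Qed.

Lemma W_facts p W : 2 < p -> ground_state p W ->
  0 < W 0 /\ Phi p (W 0) = 0 /\ Derive W 0 = 0 /\
  (forall r, Derive W r ^ 2 = - 2 * Phi p (W r)).
Proof.
  intros Hp [Hpos [Hmax [Hode [Hlp Hlm]]]].
  set (W1 := Derive W). set (W2 := Derive_n W 2).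
  assert (Hd : forall r, is_derive W r (W1 r)) by (intros r; apply Hode).
  assert (Hd1 : forall r, is_derive W1 r (W2 r)) by (intros r; apply Hode).
  assert (Heq : forall r, W2 r = W r - Rpower (W r) (p-1)) by (intros r; destruct (Hode r) as [_ [_ E]]; fold W1 W2 in E; lra).
  assert (HW10 : W1 0 = 0).
  { apply (deriv_max_zero W 0 (W1 0) 1); auto. lra. }
  assert (HE : forall r, En p W W1 r = En p W W1 0).
  { intros r. apply const_of_deriv0. intros x. unfold En.
    eapply d_eq. apply d_plus.
    apply d_ext with (f := fun y => /2 * (W1 y ^ 2)). intros; field.
    apply d_scal, d_sqr, Hd1.
    apply d_comp. apply d_Phi; auto. apply Hd.
    rewrite Heq. field. }
  assert (HE0 : En p W W1 0 = Phi p (W 0)) by (unfold En; rewrite HW10; field).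
  set (c0 := Phi p (W 0)).
  assert (Hc0 : 0 <= c0).
  { destruct (Rle_or_lt 0 c0) as [|Hn]; auto. exfalso.
    destruct (is_lim_pinf_0 W Hlp (sqrt (- c0)) ltac:(apply sqrt_lt_R0; lra)) as [R0 HR].
    specialize (HR (R0 + 1) ltac:(lra)).
    assert (Hs : sqrt (- c0) * sqrt (-c0) = - c0) by (apply sqrt_sqrt; lra).
    assert (Hw := Hpos (R0 + 1)). rewrite Rabs_pos_eq in HR by lra.
    assert (- (W (R0+1))^2/2 <= Phi p (W (R0 + 1))) by (apply Phi_ge; auto).
    specialize (HE (R0 + 1)). rewrite HE0 in HE. unfold En in HE. fold c0 in HE.
    assert (0 <= W1 (R0 + 1) ^ 2) by apply pow2_ge_0.
    assert (W (R0 + 1) ^ 2 < - c0) by nra. lra. }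
  assert (Hc0z : c0 = 0).
  { destruct Hc0 as [Hc0|]; auto. exfalso.
    destruct (is_lim_pinf_0 W Hlp 1 ltac:(lra)) as [R0 HR].
    set (R1 := Rmax R0 0 + 1).
    assert (HR1 : forall x, R1 <= x -> 0 < W x <= 1).
    { intros x Hx. split; auto. specialize (HR x ltac:(unfold R1 in Hx; assert (R0 <= Rmax R0 0) by apply Rmax_l; lra)).
      rewrite Rabs_pos_eq in HR by (left; auto). lra. }
    assert (Hq1 : qf p 1 < 0).
    { unfold qf. rewrite rpow_one_l. 
      assert (1/p < 1/2). { apply Rmult_lt_reg_r with (2*p). lra. field_simplify; lra. } lra. }
    assert (HW1sq : forall x, R1 <= x -> 2 * c0 <= W1 x ^ 2 <= 2 * c0 + 1).
    { intros x Hx. destruct (HR1 x Hx) as [A B].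
      specialize (HE x). rewrite HE0 in HE. unfold En in HE. fold c0 in HE.
      assert (Phi p (W x) <= 0).
      { rewrite Phi_q by auto. assert (qf p (W x) <= qf p 1) by (apply qf_le; lra).
        assert (0 <= W x ^ 2) by apply pow2_ge_0. nra. }
      assert (- (W x)^2/2 <= Phi p (W x)) by (apply Phi_ge; auto).
      assert (W x ^ 2 <= 1) by nra. lra. }
    set (C := 2 * c0 + 2).
    assert (Hbd : forall x, R1 <= x -> Rabs (W x * W1 x) <= C).
    { intros x Hx. destruct (HR1 x Hx) as [A B]. destruct (HW1sq x Hx).
      assert ((W x * W1 x)^2 <= 2 * c0 + 1).
      { replace ((W x * W1 x)^2) with (W x ^2 * W1 x ^ 2) by ring.
        assert (W x ^ 2 <= 1) by nra. assert (0 <= W1 x ^ 2) by apply pow2_ge_0. nra. }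
      rewrite <- (pow2_abs (W x * W1 x)) in H1.
      assert (0 <= Rabs (W x * W1 x)) by apply Rabs_pos.
      unfold C. nra. }
    set (x := R1 + C / c0 + 1).
    assert (Hx : R1 <= x) by (unfold x; assert (0 < C / c0) by (apply Rdiv_lt_0_compat; unfold C; lra); lra).
    assert (Hm : W R1 * W1 R1 - 2 * c0 * R1 <= W x * W1 x - 2 * c0 * x).
    { apply (mvt_incr (fun y => W y * W1 y - 2 * c0 * y) (fun y => (W1 y * W1 y + W y * W2 y) - 2 * c0 * 1) R1 x); auto.
      - intros y Hy. apply d_minus. apply d_mult; auto. apply d_scal, d_id.
      - intros y Hy. destruct (HR1 y ltac:(lra)) as [A B]. destruct (HW1sq y ltac:(lra)).
        rewrite Heq. rewrite rpm1 by auto.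
        assert (Rpower (W y) (p-2) <= 1).
        { rewrite <- (rpow_one_l (p-2)). apply Rle_Rpower_l; lra. }
        assert (0 <= W y * (W y - W y * Rpower (W y) (p - 2))).
        { apply Rmult_le_pos. lra. assert (0 <= W y * (1 - Rpower (W y) (p-2))) by (apply Rmult_le_pos; lra). nra. }
        simpl in *. nra. }
    assert (H1 := Hbd R1 ltac:(lra)). assert (H2 := Hbd x Hx).
    assert (A1 := Rle_abs (- (W R1 * W1 R1))). assert (A2 := Rle_abs (W x * W1 x)).
    rewrite Rabs_Ropp in A1.
    assert (2 * c0 * (x - R1) <= 2 * C) by (ring_simplify; ring_simplify in Hm; lra).
    unfold x in H. replace (2 * c0 * (R1 + C / c0 + 1 - R1)) with (2 * C + 2 * c0) in H by (field; lra).
    lra. }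
  split; [apply Hpos|]. split; [auto|]. split; [auto|].
  intros r. specialize (HE r). rewrite HE0 in HE. fold c0 in HE. rewrite Hc0z in HE.
  unfold En in HE. fold W1. lra.
Qed.

End File6.

Section File7.

Definition cl12 (s : R) := Rmax 1 (Rmin 2 s).

Lemma cl12_in s : 1 <= cl12 s <= 2.
Proof. unfold cl12, Rmax, Rmin. repeat destruct Rle_dec; lra. Qed.

Lemma cl12_id s : 1 <= s <= 2 -> cl12 s = s.
Proof. intros. unfold cl12, Rmax, Rmin. repeat destruct Rle_dec; lra. Qed.

Lemma cl12_lip s z : Rabs (cl12 s - cl12 z) <= Rabs (s - z).
Proof.
  unfold cl12, Rmax, Rmin. repeat destruct Rle_dec; unfold Rabs; repeat destruct Rcase_abs; lra.
Qed.

Lemma cont_R (f : R -> R) x : continuous f x ->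
  forall eps, 0 < eps -> exists d, 0 < d /\ forall y, Rabs (y - x) < d -> Rabs (f y - f x) < eps.
Proof.
  intros Hc eps He. apply filterlim_locally with (eps := mkposreal eps He) in Hc.
  destruct Hc as [d Hd]. exists d. split. apply cond_pos. intros y Hy. apply (Hd y Hy).
Qed.

Lemma within_eps (u : R -> R) x0 :
  filterlim u (within (fun x => 1 <= x <= 2) (locally x0)) (locally (u x0)) ->
  forall eps, 0 < eps -> exists d, 0 < d /\
    forall y, 1 <= y <= 2 -> Rabs (y - x0) < d -> Rabs (u y - u x0) < eps.
Proof.
  intros Hf eps He. apply filterlim_locally with (eps := mkposreal eps He) in Hf.
  destruct Hf as [d Hd]. exists d. split. apply cond_pos. intros y Hy1 Hy2.
  apply (Hd y Hy2 Hy1).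
Qed.

Lemma clamp_cont (u : R -> R) :
  (forall r, 1 <= r <= 2 ->
     filterlim u (within (fun x => 1 <= x <= 2) (locally r)) (locally (u r))) ->
  forall z, continuous (fun s => u (cl12 s)) z.
Proof.
  intros Hu z. apply filterlim_locally. intros eps.
  destruct (within_eps u (cl12 z) (Hu _ (cl12_in z)) eps (cond_pos eps)) as [d [Hd H]].
  exists (mkposreal d Hd). intros y Hy. change (Rabs (u (cl12 y) - u (cl12 z)) < eps).
  apply H. apply cl12_in. eapply Rle_lt_trans. apply cl12_lip. exact Hy.
Qed.

Lemma cont_pow (f : R -> R) x k : continuous f x -> continuous (fun y => f y ^ k) x.
Proof.
  intros Hf. induction k.
  - simpl. apply (continuous_const (U:=R_UniformSpace) (V:=R_UniformSpace) 1 x).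
  - simpl. apply (continuous_mult (U:=R_UniformSpace) (K:=R_AbsRing) f (fun y => f y ^ k)); auto.
Qed.

Lemma cont_mult (f g : R -> R) x : continuous f x -> continuous g x -> continuous (fun y => f y * g y) x.
Proof. intros; apply (continuous_mult (U:=R_UniformSpace) (K:=R_AbsRing) f g); auto. Qed.

Lemma cont_id x : continuous (fun y : R => y) x.
Proof. apply (continuous_id (U:=R_UniformSpace)). Qed.

Lemma cont_const (c x : R) : continuous (fun _ : R => c) x.
Proof. apply (continuous_const (U:=R_UniformSpace) (V:=R_UniformSpace)). Qed.

Lemma cont_comp (f g : R -> R) x : continuous f x -> continuous g (f x) -> continuous (fun y => g (f y)) x.
Proof. intros; apply (continuous_comp (U:=R_UniformSpace) (V:=R_UniformSpace) (W:=R_UniformSpace)); auto. Qed.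

Lemma cont_plus (f g : R -> R) x : continuous f x -> continuous g x -> continuous (fun y => f y + g y) x.
Proof. intros; apply (continuous_plus (U:=R_UniformSpace) (K:=R_AbsRing) (V:=R_NormedModule) f g); auto. Qed.

Lemma cont_of_deriv (f : R -> R) x l : is_derive f x l -> continuous f x.
Proof. intros H. apply (ex_derive_continuous (K:=R_AbsRing) (V:=R_NormedModule)). exists l; auto. Qed.

Section Setup.
Variables (N : nat) (p lam rb : R) (u : R -> R).
Hypothesis HN : (2 <= N)%nat.
Hypothesis Hp : 2 < p.
Hypothesis Hlam : 0 < lam.
Hypothesis Hsol : pos_radial_sol N p lam u.
Hypothesis Hmax : unique_max_point u rb.

Definition sl := sqrt lam.
Definition Lam := Rpower lam (1/(2-p)).
Definition sv r := r / sl + rb.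
Definition w r := Lam * u (sv r).
Definition w1 r := Lam * (/ sl * Derive u (sv r)).
Definition w2 r := Lam * (/ sl * (/ sl * Derive_n u 2 (sv r))).
Definition cc r := (INR N - 1) / (sv r * sl).
Definition aa := sl * (1 - rb).
Definition bb := sl * (2 - rb).
Definition MM := w 0.
Definition beta := (INR N - 1) / sl.

Lemma sl_pos : 0 < sl. Proof. apply sqrt_lt_R0; auto. Qed.
Lemma sl2 : sl * sl = lam. Proof. apply sqrt_sqrt; lra. Qed.
Lemma Lam_pos : 0 < Lam. Proof. apply rpow_pos. Qed.
Lemma rb_in : 1 < rb < 2. Proof. apply Hmax. Qed.
Lemma INR_N : 1 <= INR N - 1.
Proof. assert (2 <= INR N) by (replace 2 with (INR 2) by (simpl; ring); apply le_INR; auto). lra. Qed.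

Lemma sv_in r : aa < r < bb -> 1 < sv r < 2.
Proof.
  intros Hr. assert (H1 := sl_pos). unfold aa, bb in Hr. unfold sv.
  split.
  - apply Rmult_lt_reg_r with sl; auto. field_simplify; try lra. 
  - apply Rmult_lt_reg_r with sl; auto. field_simplify; try lra.
Qed.

Lemma ab_props : aa < 0 < bb /\ bb - aa = sl.
Proof.
  assert (H1 := sl_pos). assert (H2 := rb_in). unfold aa, bb.
  split; [split|]; nra.
Qed.

Lemma sv_0 : sv 0 = rb.
Proof. unfold sv. assert (H1 := sl_pos). field. lra. Qed.

Lemma d_sv r : is_derive sv r (/ sl).
Proof.
  unfold sv. assert (H1 := sl_pos).
  apply d_ext with (f := fun y => / sl * y + rb). intros; field; lra.
  eapply d_eq. apply d_plus. apply d_scal, d_id. apply d_const. ring.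
Qed.

Lemma u_facts s : 1 < s < 2 ->
  is_derive u s (Derive u s) /\ is_derive (Derive u) s (Derive_n u 2 s) /\ 0 < u s /\
  - Derive_n u 2 s - (INR N - 1) / s * Derive u s + lam * u s = Rpower (u s) (p - 1).
Proof.
  intros Hs. destruct Hsol as [_ [_ [_ [Hpos Hode]]]].
  destruct (Hode s Hs) as [A [B C]]. split; [exact A|split; [exact B|split; [apply Hpos; exact Hs|exact C]]].
Qed.

Lemma Lam_pow x : 0 < x -> Lam * / lam * Rpower x (p-1) = Rpower (Lam * x) (p-1).
Proof.
  intros Hx. rewrite <- Rpower_mult_distr by (auto; apply Lam_pos).
  f_equal. unfold Lam. rewrite Rpower_mult.
  rewrite <- (Rpower_1 lam) at 2 by auto. rewrite <- Rpower_Ropp, <- Rpower_plus.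
  f_equal. field. lra.
Qed.

Lemma w_props r : aa < r < bb ->
  is_derive w r (w1 r) /\ is_derive w1 r (w2 r) /\ 0 < w r /\
  w2 r = w r - Rpower (w r) (p-1) - cc r * w1 r /\ 0 <= cc r <= beta.
Proof.
  intros Hr. assert (Hs := sv_in r Hr). destruct (u_facts (sv r) Hs) as [A [B [C D]]].
  assert (H1 := sl_pos). assert (H2 := Lam_pos). assert (HN1 := INR_N).
  split; [|split; [|split; [|split]]].
  - unfold w, w1. apply d_scal. eapply d_eq. apply d_comp. apply A. apply d_sv. ring.
  - unfold w1, w2. apply d_scal, d_scal. eapply d_eq. apply (d_comp (Derive u) sv). apply B. apply d_sv. ring.
  - unfold w. apply Rmult_lt_0_compat; auto.
  - unfold w, w2, w1, cc. rewrite <- Lam_pow by auto.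
    assert (Hl : lam = sl * sl) by (rewrite sl2; auto).
    assert (Du2 : Derive_n u 2 (sv r) = lam * u (sv r) - Rpower (u (sv r)) (p-1) - (INR N - 1) / sv r * Derive u (sv r)) by lra.
    rewrite Du2. rewrite Hl. field. lra.
  - unfold cc, beta. split.
    + apply Rdiv_le_0_compat. lra. apply Rmult_lt_0_compat; lra.
    + unfold Rdiv. apply Rmult_le_compat_l. lra.
      apply Rinv_le_contravar. lra. nra.
Qed.

Lemma w1_0 : w1 0 = 0.
Proof.
  unfold w1. rewrite sv_0.
  assert (Hd : Derive u rb = 0).
  { assert (H2 := rb_in). destruct (u_facts rb H2) as [A _].
    apply (deriv_max_zero u rb (Derive u rb) (Rmin (rb - 1) (2 - rb))); auto.
    apply Rmin_glb_lt; lra.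
    intros y Hy. assert (Rmin (rb - 1) (2 - rb) <= rb - 1) by apply Rmin_l.
    assert (Rmin (rb - 1) (2 - rb) <= 2 - rb) by apply Rmin_r.
    destruct (Req_dec y rb) as [->|Hne]. lra. left. apply Hmax. lra. auto. }
  rewrite Hd. ring.
Qed.

Lemma w_ltM r : aa < r < bb -> r <> 0 -> w r < MM.
Proof.
  intros Hr Hne. unfold MM, w. rewrite sv_0. apply Rmult_lt_compat_l. apply Lam_pos.
  apply Hmax. apply sv_in; auto. unfold sv. intro E. apply Hne.
  assert (H1 := sl_pos). assert (r / sl = 0) by lra.
  apply (f_equal (fun z => z * sl)) in H. field_simplify in H; lra.
Qed.

Lemma w_lim_b g : 0 < g -> exists d, 0 < d /\ forall r, bb - d < r < bb -> w r < g.
Proof.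
  intros Hg. destruct Hsol as [Hc [_ [Hu2 _]]].
  assert (H1 := sl_pos). assert (H2 := Lam_pos).
  destruct (within_eps u 2 (Hc 2 ltac:(lra)) (g / Lam) ltac:(apply Rdiv_lt_0_compat; lra)) as [d [Hd H]].
  exists (sl * Rmin d 1). split. apply Rmult_lt_0_compat; auto. apply Rmin_glb_lt; lra.
  intros r Hr. assert (Hm1 : Rmin d 1 <= d) by apply Rmin_l. assert (Hm2 : Rmin d 1 <= 1) by apply Rmin_r.
  assert (Hsv : 2 - Rmin d 1 < sv r < 2).
  { unfold sv, bb in *. split; apply Rmult_lt_reg_r with sl; auto; field_simplify; lra. }
  specialize (H (sv r) ltac:(lra) ltac:(rewrite Rabs_left; lra)).
  rewrite Hu2, Rminus_0_r in H. unfold w.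
  apply Rle_lt_trans with (Lam * Rabs (u (sv r))). apply Rmult_le_compat_l. lra. apply Rle_abs.
  apply Rmult_lt_reg_r with (/ Lam). apply Rinv_0_lt_compat; auto.
  replace (Lam * Rabs (u (sv r)) * / Lam) with (Rabs (u (sv r))) by (field; lra). exact H.
Qed.

Lemma w_lim_a g : 0 < g -> exists d, 0 < d /\ forall r, aa < r < aa + d -> w r < g.
Proof.
  intros Hg. destruct Hsol as [Hc [Hu1 _]].
  assert (H1 := sl_pos). assert (H2 := Lam_pos).
  destruct (within_eps u 1 (Hc 1 ltac:(lra)) (g / Lam) ltac:(apply Rdiv_lt_0_compat; lra)) as [d [Hd H]].
  exists (sl * Rmin d 1). split. apply Rmult_lt_0_compat; auto. apply Rmin_glb_lt; lra.
  intros r Hr. assert (Hm1 : Rmin d 1 <= d) by apply Rmin_l. assert (Hm2 : Rmin d 1 <= 1) by apply Rmin_r.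
  assert (Hsv : 1 < sv r < 1 + Rmin d 1).
  { unfold sv, aa in *. split; apply Rmult_lt_reg_r with sl; auto; field_simplify; lra. }
  specialize (H (sv r) ltac:(lra) ltac:(rewrite Rabs_pos_eq; lra)).
  rewrite Hu1, Rminus_0_r in H. unfold w.
  apply Rle_lt_trans with (Lam * Rabs (u (sv r))). apply Rmult_le_compat_l. lra. apply Rle_abs.
  apply Rmult_lt_reg_r with (/ Lam). apply Rinv_0_lt_compat; auto.
  replace (Lam * Rabs (u (sv r)) * / Lam) with (Rabs (u (sv r))) by (field; lra). exact H.
Qed.

Lemma half_right : half p w w1 w2 cc bb MM.
Proof.
  destruct ab_props as [[Ha Hb] _].
  split; [auto|]. split; [reflexivity|]. split; [apply w1_0|]. split; [|split].
  - intros r Hr. destruct (w_props r ltac:(lra)) as [A [B [C [D _]]]]. auto.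
  - intros r Hr. apply w_ltM; lra.
  - apply w_lim_b.
Qed.

Lemma half_left : half p (fun r => w (- r)) (fun r => - w1 (- r)) (fun r => w2 (- r))
   (fun r => - cc (- r)) (- aa) MM.
Proof.
  destruct ab_props as [[Ha Hb] _].
  split; [lra|]. split; [unfold MM; f_equal; ring|]. split; [rewrite Ropp_0, w1_0; ring|]. split; [|split].
  - intros r Hr. destruct (w_props (- r) ltac:(lra)) as [A [B [C [D _]]]]. split; [|split; [|split]].
    + eapply d_eq. apply (d_comp w (fun y => - y)). apply A. apply d_ext with (f := fun y => -1 * y).
      intros; ring. apply d_scal, d_id. ring.
    + eapply d_eq. apply (d_comp (fun y => - w1 y) (fun y => - y)). apply d_opp, B.
      apply d_ext with (f := fun y => -1 * y). intros; ring. apply d_scal, d_id. ring.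
    + auto.
    + rewrite D. ring.
  - intros r Hr. apply w_ltM; lra.
  - intros g Hg. destruct (w_lim_a g Hg) as [d [Hd H]]. exists d. split; auto.
    intros r Hr. apply H. lra.
Qed.

Lemma w_ex_RInt k : ex_RInt (fun r => w r ^ 2 * r ^ k) aa bb.
Proof.
  destruct Hsol as [Hc _].
  destruct ab_props as [[Ha Hb] _].
  apply ex_RInt_ext with (f := fun r => (Lam * u (cl12 (sv r))) ^ 2 * r ^ k).
  - intros x Hx. rewrite Rmin_left, Rmax_right in Hx by lra. unfold w.
    rewrite cl12_id; auto. assert (H := sv_in x Hx). lra.
  - apply (ex_RInt_continuous (V:=R_CompleteNormedModule)). intros z _.
    apply cont_mult; [|apply cont_pow, cont_id].
    apply cont_pow. apply cont_mult. apply cont_const.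
    apply (cont_comp sv (fun s => u (cl12 s))). apply (cont_of_deriv sv z (/ sl)), d_sv.
    apply clamp_cont; auto.
Qed.

End Setup.

End File7.

Section File8.

Definition qeta p W0 eta := Rmin (eta / (4 * W0 ^ 2)) (qf p (2 * W0)).
Definition Seta (N : nat) p W0 eta :=
  Rmax (4 * sqrt (1 / qeta p W0 eta)) (2 * (INR N - 1) * (1 + qeta p W0 eta) / qeta p W0 eta) + 1.

Section Asym.
Variables (N : nat) (p lam rb : R) (u : R -> R) (W0 : R).
Hypothesis HN : (2 <= N)%nat.
Hypothesis Hp : 2 < p.
Hypothesis Hlam : 0 < lam.
Hypothesis Hsol : pos_radial_sol N p lam u.
Hypothesis Hmax : unique_max_point u rb.
Hypothesis HW0 : 0 < W0.
Hypothesis HPW0 : Phi p W0 = 0.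

Notation v := (w p lam rb u).
Notation v1 := (w1 p lam rb u).
Notation v2 := (w2 p lam rb u).
Notation c := (cc N lam rb).
Notation M := (MM p lam rb u).
Notation bt := (beta N lam).
Notation A := (aa lam rb).
Notation B := (bb lam rb).
Notation vl := (fun r => w p lam rb u (- r)).
Notation v1l := (fun r => - w1 p lam rb u (- r)).
Notation v2l := (fun r => w2 p lam rb u (- r)).
Notation cl := (fun r => - cc N lam rb (- r)).

Lemma HR : half p v v1 v2 c B M.
Proof. apply half_right; auto. Qed.
Lemma HL : half p vl v1l v2l cl (- A) M.
Proof. apply half_left; auto. Qed.
Lemma Hab : A < 0 < B /\ B - A = sl lam.
Proof. apply (ab_props lam rb u); auto. Qed.

Lemma cR r : 0 <= r < B -> 0 <= c r <= bt.
Proof. intros. destruct Hab as [[? ?] _]. apply (w_props N p lam rb u); auto; lra. Qed.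
Lemma cL r : 0 <= r < - A -> - bt <= cl r <= 0.
Proof. intros. destruct Hab as [[? ?] _].
  destruct (w_props N p lam rb u HN Hp Hlam Hsol (- r)) as [_ [_ [_ [_ Hc]]]]. lra. lra. Qed.

Lemma bt_pos : 0 < bt.
Proof. unfold beta. apply Rdiv_lt_0_compat. assert (H := INR_N N HN). lra. apply sl_pos; auto. Qed.

Lemma ER_ge0 r : 0 <= r < B -> 0 <= En p v v1 r.
Proof. apply (dec_E_ge0 p v v1 v2 c B M Hp HR). intros; apply cR; auto. Qed.

Lemma E0_ge0 : 0 <= Phi p M.
Proof. rewrite <- (E0_eq p v v1 v2 c B M HR). apply ER_ge0. destruct Hab as [[? ?] _]. lra. Qed.

Lemma M_ge_W0 : W0 <= M.
Proof. apply (Phi_nonneg_ge p W0 Hp HW0 HPW0). apply (h_Mpos p v v1 v2 c B M HR). apply E0_ge0. Qed.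

Lemma EL_ge r : 0 <= r < - A -> Phi p M <= En p vl v1l r.
Proof.
  intros Hr. rewrite <- (E0_eq p vl v1l v2l cl (- A) M HL).
  apply (inc_E_ge p vl v1l v2l cl (- A) M Hp HL); auto. intros; destruct (cL r0); auto.
Qed.

Lemma monoR r : 0 < r < B -> v1 r < 0.
Proof. apply (mono_lemma p W0 v v1 v2 c B M Hp HW0 HPW0 HR). apply ER_ge0. Qed.

Lemma monoL r : 0 < r < - A -> v1l r < 0.
Proof.
  apply (mono_lemma p W0 vl v1l v2l cl (- A) M Hp HW0 HPW0 HL).
  intros r0 Hr0. assert (H := EL_ge r0 Hr0). assert (H2 := E0_ge0). lra.
Qed.

Lemma qeta_pos eta : 0 < eta -> 0 < qeta p W0 eta.
Proof.
  intros He. unfold qeta. apply Rmin_glb_lt.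
  apply Rdiv_lt_0_compat; auto. assert (0 < W0^2) by (apply pow_lt; auto). lra.
  rewrite <- (qW0 p W0 HW0 HPW0). apply qf_lt; lra.
Qed.

Lemma energy_small eta : 0 < eta -> Seta N p W0 eta <= sl lam -> Phi p M < eta.
Proof.
  intros He HS. destruct (Rlt_or_le (Phi p M) eta) as [|Hge]; auto. exfalso.
  assert (HM := h_Mpos p v v1 v2 c B M HR).
  assert (HMW := M_ge_W0).
  set (qe := qeta p W0 eta). assert (Hqe : 0 < qe) by (apply qeta_pos; auto).
  set (q := qf p M).
  assert (HPq : Phi p M = M ^ 2 * q) by (apply Phi_q; auto).
  assert (Hqq : qe <= q).
  { destruct (Rle_or_lt M (2 * W0)).
    - apply Rle_trans with (eta / (4 * W0 ^ 2)). apply Rmin_l.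
      assert (HM2 : 0 < M^2) by (apply pow_lt; auto).
      assert (HM3 : M^2 <= 4 * W0^2) by nra.
      assert (HqE : q = Phi p M / M ^ 2) by (rewrite HPq; field; lra).
      rewrite HqE. assert (0 < W0^2) by (apply pow_lt; auto).
      apply Rmult_le_reg_r with (M^2 * (4 * W0^2)). nra.
      replace (eta / (4 * W0 ^ 2) * (M ^ 2 * (4 * W0 ^ 2))) with (eta * M^2) by (field; lra).
      replace (Phi p M / M ^ 2 * (M ^ 2 * (4 * W0 ^ 2))) with (Phi p M * (4 * W0^2)) by (field; lra).
      nra.
    - apply Rle_trans with (qf p (2 * W0)). apply Rmin_r. apply qf_le; lra. }
  assert (Hq0 : 0 < q) by lra.
  set (Hh := Phi p M / M).
  assert (HHh : Hh = M * q) by (unfold Hh; rewrite HPq; field; lra).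
  assert (HHp : 0 < Hh) by (rewrite HHh; apply Rmult_lt_0_compat; auto).
  assert (Hsq : sqrt M / sqrt Hh <= sqrt (1 / qe)).
  { rewrite <- sqrt_div_alt by auto. apply sqrt_le_1_alt. rewrite HHh.
    replace (M / (M * q)) with (1 / q) by (field; lra).
    apply Rmult_le_reg_r with (q * qe). nra. field_simplify; lra. }
  assert (Hsl := sl_pos lam Hlam).
  assert (HS1 : 4 * sqrt (1 / qe) < sl lam).
  { eapply Rlt_le_trans; [|exact HS]. unfold Seta. fold qe.
    assert (H := Rmax_l (4 * sqrt (1 / qe)) (2 * (INR N - 1) * (1 + qe) / qe)). lra. }
  assert (HS2 : 2 * (INR N - 1) * (1 + qe) / qe < sl lam).
  { eapply Rlt_le_trans; [|exact HS]. unfold Seta. fold qe.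
    assert (H := Rmax_r (4 * sqrt (1 / qe)) (2 * (INR N - 1) * (1 + qe) / qe)). lra. }
  assert (HN1 := INR_N N HN).
  assert (Hbt : bt <= q / (2 * (1 + q))).
  { unfold beta. apply Rle_trans with (qe / (2 * (1 + qe))).
    - apply Rmult_le_reg_r with (sl lam * (2 * (1 + qe)) / qe).
      apply Rdiv_lt_0_compat; nra.
      replace ((INR N - 1) / sl lam * (sl lam * (2 * (1 + qe)) / qe)) with (2 * (INR N - 1) * (1 + qe) / qe) by (field; lra).
      replace (qe / (2 * (1 + qe)) * (sl lam * (2 * (1 + qe)) / qe)) with (sl lam) by (field; lra). lra.
    - apply Rmult_le_reg_r with (2 * (1 + q) * (1 + qe)). nra.
      field_simplify; nra. }
  assert (HbR : B <= 2 * sqrt M / sqrt Hh).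
  { apply (time_lemma p v v1 v2 c B M HR Hh HHp monoR).
    intros r Hr. assert (Hr' : 0 <= r < B) by lra.
    assert (HEl := dec_E_lower p v v1 v2 c B M Hp HR bt cR monoR r Hr').
    rewrite (E0_eq p v v1 v2 c B M HR) in HEl.
    set (K := sqrt (2 * Phi p M + M ^ 2)) in HEl.
    assert (HK : K <= M * (1 + q)).
    { unfold K. rewrite <- (sqrt_pow2 (M * (1 + q))) by nra. apply sqrt_le_1_alt. rewrite HPq. nra. }
    assert (HbK : bt * K <= Hh / 2).
    { rewrite HHh. assert (0 < bt) by apply bt_pos.
      apply Rle_trans with (bt * (M * (1 + q))). apply Rmult_le_compat_l; lra.
      apply Rle_trans with (q / (2 * (1 + q)) * (M * (1 + q))). apply Rmult_le_compat_r; nra.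
      right. field. lra. }
    assert (Hv := h_pos p v v1 v2 c B M HR r Hr').
    assert (HvM : v r <= M) by (apply (h_leM p v v1 v2 c B M HR); auto).
    assert (Hhl := h_lemma p W0 Hp HW0 HPW0 (v r) M ltac:(lra) E0_ge0).
    fold Hh in Hhl.
    unfold En in HEl.
    assert (bt * K * (M - v r) <= Hh / 2 * (M - v r)) by (apply Rmult_le_compat_r; lra).
    nra. }
  assert (HbL : - A <= 2 * sqrt M / sqrt Hh).
  { apply (time_lemma p vl v1l v2l cl (- A) M HL Hh HHp monoL).
    intros r Hr. assert (Hr' : 0 <= r < - A) by lra.
    assert (HEl := EL_ge r Hr').
    assert (Hv := h_pos p vl v1l v2l cl (- A) M HL r Hr').
    assert (HvM : vl r <= M) by (apply (h_leM p vl v1l v2l cl (- A) M HL); auto).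
    assert (Hhl := h_lemma p W0 Hp HW0 HPW0 (vl r) M ltac:(lra) E0_ge0).
    fold Hh in Hhl. unfold En in HEl. cbv beta in *.
    assert (0 <= (M - w p lam rb u (- r)) * Hh) by (apply Rmult_le_pos; lra).
    replace ((- w1 p lam rb u (- r)) ^ 2) with (w1 p lam rb u (- r) ^ 2) in HEl by ring.
    lra. }
  destruct Hab as [_ Hsum].
  assert (sl lam <= 4 * sqrt (1 / qe)) by lra.
  lra.
Qed.


Lemma sqrt_exp2 L : sqrt (exp (-2 * L)) = exp (- L).
Proof.
  replace (exp (-2 * L)) with (exp (- L) * exp (- L)) by (rewrite <- exp_plus; f_equal; ring).
  apply sqrt_square. left; apply exp_pos.
Qed.

Lemma b_large L : Phi p M < exp (-2 * L) / 2 -> L < B.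
Proof.
  intros Hs. set (dl := Phi p M).
  assert (Hdl : 0 <= dl) by apply E0_ge0.
  assert (Hyp : forall r, 0 <= r < B -> v1 r ^ 2 <= 2 * dl + v r ^ 2).
  { intros r Hr. assert (H1 := E_Phi_bound p v v1 v2 c B M Hp HR r Hr).
    assert (H2 := dec_E_mono p v v1 v2 c B M Hp HR ltac:(intros; apply cR; auto) 0 r ltac:(lra) ltac:(lra)).
    rewrite (E0_eq p v v1 v2 c B M HR) in H2. unfold dl. lra. }
  assert (HL0 := lower_lemma p v v1 v2 c B M HR dl Hdl Hyp).
  assert (Hsq : sqrt (2 * dl) < exp (- L)).
  { rewrite <- sqrt_exp2. apply sqrt_lt_1_alt. split; [lra|]. unfold dl. lra. }
  destruct (Rlt_or_le L B) as [|HBL]; auto. exfalso.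
  assert (exp B <= exp L) by (destruct (Req_dec B L) as [->|]; [lra|left; apply exp_increasing; lra]).
  assert (Hone : exp (- L) * exp L = 1) by (rewrite <- exp_plus; replace (- L + L) with 0 by ring; apply exp_0).
  assert (0 < exp B) by apply exp_pos. assert (0 <= sqrt (2 * dl)) by apply sqrt_pos.
  assert (0 < exp L) by apply exp_pos.
  assert (sqrt (2 * dl) * exp B <= sqrt (2 * dl) * exp L) by (apply Rmult_le_compat_l; lra).
  assert (sqrt (2 * dl) * exp L < exp (- L) * exp L) by (apply Rmult_lt_compat_r; lra).
  assert (Hg1 := W0_gt1 p W0 Hp HW0 HPW0). assert (Hg2 := M_ge_W0). lra.
Qed.

Lemma a_large L : 0 <= L ->
  2 * Phi p M * exp (2 * bt * L) + M ^ 2 * (exp (2 * bt * L) - 1) < exp (-2 * L) -> L < - A.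
Proof.
  intros HL0 Hs. destruct (Rlt_or_le L (- A)) as [|HAL]; auto. exfalso.
  assert (Hbt := bt_pos).
  set (e := exp (2 * bt * L)).
  assert (He1 : 1 <= e) by (unfold e; rewrite <- exp_0; destruct (Req_dec L 0) as [->|];
     [rewrite Rmult_0_r; lra | left; apply exp_increasing; nra]).
  set (dl := ((2 * Phi p M + M ^ 2) * e - M ^ 2) / 2).
  assert (HE0 := E0_ge0).
  assert (Hdl : 0 <= dl) by (unfold dl; assert (0 <= M^2) by apply pow2_ge_0; nra).
  assert (Hyp : forall r, 0 <= r < - A -> v1l r ^ 2 <= 2 * dl + vl r ^ 2).
  { intros r Hr. assert (H1 := E_Phi_bound p vl v1l v2l cl (- A) M Hp HL r Hr).
    assert (H2 := inc_E_upper p vl v1l v2l cl (- A) M Hp HL bt ltac:(lra) cL r Hr).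
    rewrite (E0_eq p vl v1l v2l cl (- A) M HL) in H2.
    assert (exp (2 * bt * r) <= e) by (unfold e; destruct (Req_dec r L) as [->|]; [lra|left; apply exp_increasing; nra]).
    assert (0 <= 2 * Phi p M + M ^ 2) by (assert (0 <= M^2) by apply pow2_ge_0; lra).
    assert ((2 * Phi p M + M ^ 2) * exp (2 * bt * r) <= (2 * Phi p M + M ^ 2) * e) by (apply Rmult_le_compat_l; auto).
    unfold dl. lra. }
  assert (HL1 := lower_lemma p vl v1l v2l cl (- A) M HL dl Hdl Hyp).
  assert (Hsq : sqrt (2 * dl) < exp (- L)).
  { rewrite <- sqrt_exp2. apply sqrt_lt_1_alt. split. lra. unfold dl. fold e in Hs. lra. }
  assert (exp (- A) <= exp L) by (destruct (Req_dec (- A) L) as [->|]; [lra|left; apply exp_increasing; lra]).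
  assert (Hone : exp (- L) * exp L = 1) by (rewrite <- exp_plus; replace (- L + L) with 0 by ring; apply exp_0).
  assert (0 < exp (- A)) by apply exp_pos. assert (0 <= sqrt (2 * dl)) by apply sqrt_pos.
  assert (0 < exp L) by apply exp_pos.
  assert (sqrt (2 * dl) * exp (- A) <= sqrt (2 * dl) * exp L) by (apply Rmult_le_compat_l; lra).
  assert (sqrt (2 * dl) * exp L < exp (- L) * exp L) by (apply Rmult_lt_compat_r; lra).
  assert (Hg1 := W0_gt1 p W0 Hp HW0 HPW0). assert (Hg2 := M_ge_W0). lra.
Qed.

Definition kap0 := 2 + (p - 1) * Rpower (2 * W0) (p - 2) + 3.

Section WithW.
Variable W : R -> R.
Hypothesis Hgs : ground_state p W.
Hypothesis HW0e : W 0 = W0.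

Lemma W_bounds r : 0 < W r <= W0 /\ Rabs (Derive W r) <= W0 /\
  is_derive W r (Derive W r) /\ is_derive (Derive W) r (Derive_n W 2 r) /\
  Derive_n W 2 r = W r - Rpower (W r) (p - 1).
Proof.
  destruct (W_facts p W Hp Hgs) as [_ [_ [_ HW1]]].
  destruct Hgs as [Hpos [Hmx [Hode _]]].
  destruct (Hode r) as [A1 [A2 A3]].
  assert (Hr := Hpos r). assert (Hm := Hmx r). rewrite HW0e in Hm.
  split; [lra|]. split; [|split; [auto|split; [auto|lra]]].
  specialize (HW1 r). assert (- (W r)^2/2 <= Phi p (W r)) by (apply Phi_ge; auto).
  rewrite <- (pow2_abs (Derive W r)) in HW1.
  assert (0 <= Rabs (Derive W r)) by apply Rabs_pos.
  assert (W r ^ 2 <= W0 ^ 2) by (apply pow_incr; lra). nra.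
Qed.

Lemma W1_0 : Derive W 0 = 0.
Proof. destruct (W_facts p W Hp Hgs) as [_ [_ [H _]]]. auto. Qed.

Lemma close L : 0 <= L -> L < B -> L < - A -> M <= 2 * W0 -> bt <= 1 ->
  forall r, - L <= r <= L ->
  (v r - W r) ^ 2 <= ((M - W0) ^ 2 + bt * (2 * W0) ^ 2) * exp (kap0 * L).
Proof.
  intros HLz HLB HLA HM2 Hb1 r Hr.
  assert (Hbt := bt_pos).
  assert (Hkap : exp ((2 + (p - 1) * Rpower (2 * W0) (p - 2) + 3 * bt) * L) <= exp (kap0 * L)).
  { unfold kap0. destruct (Req_dec L 0) as [->|]. rewrite !Rmult_0_r; lra.
    destruct (Req_dec bt 1) as [->|]. right; f_equal; ring. left; apply exp_increasing.
    apply Rmult_lt_compat_r; lra. }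
  assert (HD0 : 0 <= (M - W0) ^ 2 + bt * (2 * W0) ^ 2).
  { assert (0 <= (M - W0)^2) by apply pow2_ge_0. assert (0 <= (2*W0)^2) by apply pow2_ge_0. nra. }
  destruct (Rle_or_lt 0 r) as [Hr0|Hr0].
  - assert (H := compare_lemma p v v1 v2 c W (Derive W) (Derive_n W 2) L (2 * W0) bt Hp ltac:(lra) ltac:(lra) HLz).
    assert (Hc : (v r - W r) ^ 2 <= ((v 0 - W 0) ^ 2 + (v1 0 - Derive W 0) ^ 2 + bt * (2 * W0) ^ 2) *
       exp ((2 + (p - 1) * Rpower (2 * W0) (p - 2) + 3 * bt) * L)).
    { apply H; [| |lra].
      - intros x Hx. assert (Hx' : 0 <= x < B) by lra.
        split; [apply (h_d p v v1 v2 c B M HR); auto|].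
        split; [apply (h_d1 p v v1 v2 c B M HR); auto|].
        split; [split; [apply (h_pos p v v1 v2 c B M HR); auto|]|].
        assert (v x <= M) by (apply (h_leM p v v1 v2 c B M HR); auto). lra.
        split; [apply (h_ode p v v1 v2 c B M HR); auto|].
        destruct (cR x Hx'). rewrite Rabs_pos_eq; lra.
      - intros x Hx. destruct (W_bounds x) as [A1 [A2 [A3 [A4 A5]]]].
        split; auto. split; auto. split; [lra|]. split; [lra|auto]. }
    rewrite (h_v0 p v v1 v2 c B M HR), (h_v10 p v v1 v2 c B M HR), W1_0, HW0e in Hc.
    replace ((0 - 0) ^ 2) with 0 in Hc by ring. rewrite Rplus_0_r in Hc.
    eapply Rle_trans. exact Hc. apply Rmult_le_compat_l; auto.
  - assert (H := compare_lemma p vl v1l v2l cl (fun y => W (- y)) (fun y => - Derive W (- y))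
        (fun y => Derive_n W 2 (- y)) L (2 * W0) bt Hp ltac:(lra) ltac:(lra) HLz).
    assert (Hc : (vl (- r) - W (- - r)) ^ 2 <= ((vl 0 - W (- 0)) ^ 2 + (v1l 0 - - Derive W (- 0)) ^ 2 + bt * (2 * W0) ^ 2) *
       exp ((2 + (p - 1) * Rpower (2 * W0) (p - 2) + 3 * bt) * L)).
    { apply H; [| |lra].
      - intros x Hx. assert (Hx' : 0 <= x < - A) by lra.
        split; [apply (h_d p vl v1l v2l cl (- A) M HL); auto|].
        split; [apply (h_d1 p vl v1l v2l cl (- A) M HL); auto|].
        split; [split; [apply (h_pos p vl v1l v2l cl (- A) M HL); auto|]|].
        assert (vl x <= M) by (apply (h_leM p vl v1l v2l cl (- A) M HL); auto). cbv beta in *. lra.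
        split; [apply (h_ode p vl v1l v2l cl (- A) M HL); auto|].
        destruct (cL x Hx'). cbv beta in *. rewrite Rabs_left1; lra.
      - intros x Hx. destruct (W_bounds (- x)) as [A1 [A2 [A3 [A4 A5]]]].
        split; [|split; [|split; [lra|split; [rewrite Rabs_Ropp; lra|auto]]]].
        + eapply d_eq. apply (d_comp W (fun y => - y)). apply A3.
          apply d_ext with (f := fun y => -1 * y). intros; ring. apply d_scal, d_id. ring.
        + eapply d_eq. apply (d_comp (fun y => - Derive W y) (fun y => - y)). apply d_opp, A4.
          apply d_ext with (f := fun y => -1 * y). intros; ring. apply d_scal, d_id. ring. }
    cbv beta in Hc. rewrite !Ropp_0, !Ropp_involutive in Hc.
    assert (E1 := h_v0 p vl v1l v2l cl (- A) M HL). assert (E2 := h_v10 p vl v1l v2l cl (- A) M HL).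
    cbv beta in E1, E2. rewrite Ropp_0 in E1, E2.
    rewrite E1, W1_0, HW0e in Hc. replace (- w1 p lam rb u 0 - - 0) with (- w1 p lam rb u 0) in Hc by ring.
    rewrite E2 in Hc. replace (0 ^ 2) with 0 in Hc by ring.
    rewrite Rplus_0_r in Hc.
    eapply Rle_trans. exact Hc. apply Rmult_le_compat_l; auto.
Qed.

End WithW.
End Asym.

End File8.

Section File9.

Lemma RInt_of_deriv (F f : R -> R) a b : a <= b ->
  (forall x, a <= x <= b -> is_derive F x (f x)) ->
  (forall x, a <= x <= b -> continuous f x) ->
  ex_RInt f a b /\ RInt f a b = F b - F a.
Proof.
  intros Hab Hd Hc.
  assert (H : is_RInt f a b (minus (F b) (F a))).
  { apply (is_RInt_derive (V:=R_CompleteNormedModule)).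
    intros x Hx. rewrite Rmin_left, Rmax_right in Hx by lra. apply Hd; lra.
    intros x Hx. rewrite Rmin_left, Rmax_right in Hx by lra. apply Hc; lra. }
  split. exists (minus (F b) (F a)). exact H.
  assert (H2 := is_RInt_unique (V:=R_CompleteNormedModule) f a b _ H). rewrite H2. reflexivity.
Qed.

Lemma pow_exp_bound k : exists C, 0 < C /\ forall x, 0 <= x -> x ^ k <= C * exp (x / 2).
Proof.
  induction k as [|k [C [HC IH]]].
  - exists 1. split. lra. intros x Hx. simpl.
    assert (1 <= exp (x/2)). { rewrite <- exp_0. destruct (Req_dec x 0) as [->|].
      replace (0/2) with 0 by field. lra. left; apply exp_increasing; lra. }
    lra.
  - exists (2 * INR (S k) * C + 1). split.
    { assert (0 <= INR (S k)) by apply pos_INR. nra. }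
    intros x Hx.
    assert (H := mvt_incr (fun y => (2 * INR (S k) * C + 1) * exp (y / 2) - y ^ S k)
       (fun y => (2 * INR (S k) * C + 1) * ((/2 * 1) * exp (y / 2)) - INR (S k) * y ^ k) 0 x Hx).
    cbv beta in H.
    assert (H0 : (2 * INR (S k) * C + 1) * exp (0 / 2) - 0 ^ S k <=
                 (2 * INR (S k) * C + 1) * exp (x / 2) - x ^ S k).
    { apply H.
      - intros y Hy. apply d_minus.
        + apply d_scal. apply (d_comp exp (fun y => y / 2)). apply d_exp.
          apply d_ext with (f := fun y => / 2 * y). intros; field. apply d_scal, d_id.
        + apply is_derive_Reals. apply derivable_pt_lim_pow.
      - intros y Hy. specialize (IH y ltac:(lra)).
        assert (0 <= INR (S k)) by apply pos_INR.
        assert (0 < exp (y/2)) by apply exp_pos.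
        assert (INR (S k) * y ^ k <= INR (S k) * (C * exp (y / 2))) by (apply Rmult_le_compat_l; auto).
        nra. }
    replace (0 / 2) with 0 in H0 by field. rewrite exp_0 in H0.
    replace (0 ^ S k) with 0 in H0 by (simpl; ring).
    assert (0 <= INR (S k)) by apply pos_INR. nra.
Qed.

Lemma tail_int_right (f : R -> R) C L Y : 0 <= C -> L <= Y -> ex_RInt f L Y ->
  (forall x, L < x < Y -> Rabs (f x) <= C * exp (- x / 2)) ->
  Rabs (RInt f L Y) <= 2 * C * exp (- L / 2).
Proof.
  intros HC HLY Hf Hb.
  assert (Hd : forall s x, is_derive (fun y => s * exp (- y / 2)) x (s * ((- / 2) * exp (- x / 2)))).
  { intros s x. apply d_scal. eapply d_eq. apply (d_comp exp (fun y => - y / 2)). apply d_exp.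
    apply d_ext with (f := fun y => (- / 2) * y). intros; field. apply d_scal, d_id. ring. }
  assert (Hc : forall s x, continuous (fun y => s * exp (- y / 2)) x).
  { intros s x. apply (cont_of_deriv _ x _ (Hd s x)). }
  destruct (RInt_of_deriv (fun y => - 2 * C * exp (- y / 2)) (fun y => C * exp (- y / 2)) L Y HLY)
    as [E1 R1].
  { intros x _. eapply d_eq. apply Hd. cbv beta; field. }
  { intros x _. apply Hc. }
  destruct (RInt_of_deriv (fun y => 2 * C * exp (- y / 2)) (fun y => - C * exp (- y / 2)) L Y HLY)
    as [E2 R2].
  { intros x _. eapply d_eq. apply Hd. cbv beta; field. }
  { intros x _. apply Hc. }
  assert (U : RInt f L Y <= RInt (fun y => C * exp (- y / 2)) L Y).
  { apply RInt_le; auto. intros x Hx. specialize (Hb x Hx). apply Rabs_le_between in Hb. lra. }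
  assert (Lo : RInt (fun y => - C * exp (- y / 2)) L Y <= RInt f L Y).
  { apply RInt_le; auto. intros x Hx. specialize (Hb x Hx). apply Rabs_le_between in Hb. lra. }
  rewrite R1 in U. rewrite R2 in Lo.
  assert (0 < exp (- Y / 2)) by apply exp_pos.
  assert (0 <= C * exp (- Y / 2)) by (apply Rmult_le_pos; lra).
  apply Rabs_le_between. split; lra.
Qed.

Lemma tail_int_left (f : R -> R) C L Y : 0 <= C -> Y <= L -> ex_RInt f Y L ->
  (forall x, Y < x < L -> Rabs (f x) <= C * exp (x / 2)) ->
  Rabs (RInt f Y L) <= 2 * C * exp (L / 2).
Proof.
  intros HC HLY Hf Hb.
  assert (Hd : forall s x, is_derive (fun y => s * exp (y / 2)) x (s * ((/ 2) * exp (x / 2)))).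
  { intros s x. apply d_scal. eapply d_eq. apply (d_comp exp (fun y => y / 2)). apply d_exp.
    apply d_ext with (f := fun y => (/ 2) * y). intros; field. apply d_scal, d_id. ring. }
  assert (Hc : forall s x, continuous (fun y => s * exp (y / 2)) x).
  { intros s x. apply (cont_of_deriv _ x _ (Hd s x)). }
  destruct (RInt_of_deriv (fun y => 2 * C * exp (y / 2)) (fun y => C * exp (y / 2)) Y L HLY)
    as [E1 R1].
  { intros x _. eapply d_eq. apply Hd. cbv beta; field. }
  { intros x _. apply Hc. }
  destruct (RInt_of_deriv (fun y => - 2 * C * exp (y / 2)) (fun y => - C * exp (y / 2)) Y L HLY)
    as [E2 R2].
  { intros x _. eapply d_eq. apply Hd. cbv beta; field. }
  { intros x _. apply Hc. }
  assert (U : RInt f Y L <= RInt (fun y => C * exp (y / 2)) Y L).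
  { apply RInt_le; auto. intros x Hx. specialize (Hb x Hx). apply Rabs_le_between in Hb. lra. }
  assert (Lo : RInt (fun y => - C * exp (y / 2)) Y L <= RInt f Y L).
  { apply RInt_le; auto. intros x Hx. specialize (Hb x Hx). apply Rabs_le_between in Hb. lra. }
  rewrite R1 in U. rewrite R2 in Lo.
  assert (0 < exp (Y / 2)) by apply exp_pos.
  assert (0 <= C * exp (Y / 2)) by (apply Rmult_le_pos; lra).
  apply Rabs_le_between. split; lra.
Qed.

Lemma diff_int (f g : R -> R) a b K : a <= b -> ex_RInt f a b -> ex_RInt g a b ->
  (forall x, a <= x <= b -> Rabs (f x - g x) <= K) ->
  Rabs (RInt f a b - RInt g a b) <= (b - a) * K.
Proof.
  intros Hab Hf Hg Hb.
  assert (E : RInt (fun x => minus (f x) (g x)) a b = minus (RInt f a b) (RInt g a b))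
    by (apply (RInt_minus (V:=R_CompleteNormedModule)); auto).
  change (Rabs (minus (RInt f a b) (RInt g a b)) <= (b - a) * K). rewrite <- E.
  apply abs_RInt_le_const; auto.
  apply (ex_RInt_minus (V:=R_NormedModule)); auto.
Qed.

End File9.

Section File10.

Definition ev (P : nat -> Prop) := exists N0, forall n, (N0 <= n)%nat -> P n.
Lemma ev_and (P Q : nat -> Prop) : ev P -> ev Q -> ev (fun n => P n /\ Q n).
Proof.
  intros [N1 H1] [N2 H2]. exists (Nat.max N1 N2). intros n Hn. split.
  apply H1; lia. apply H2; lia.
Qed.
Lemma ev_mono (P Q : nat -> Prop) : (forall n, P n -> Q n) -> ev P -> ev Q.
Proof. intros H [N1 H1]. exists N1. intros n Hn. apply H, H1, Hn. Qed.

Section Main.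
Variables (N : nat) (p : R) (u : R -> R -> R) (rbar : R -> R) (W : R -> R) (lamn : nat -> R).
Hypothesis HN : (2 <= N)%nat.
Hypothesis Hsub : subcritical N p.
Hypothesis Hsol : forall lam, 0 < lam -> pos_radial_sol N p lam (u lam).
Hypothesis Hmax : forall lam, 0 < lam -> unique_max_point (u lam) (rbar lam).
Hypothesis Hgs : ground_state p W.
Hypothesis Hpos : forall n, 0 < lamn n.
Hypothesis Hlim : is_lim_seq lamn p_infty.

Notation ww n := (w p (lamn n) (rbar (lamn n)) (u (lamn n))).
Notation ww1 n := (w1 p (lamn n) (rbar (lamn n)) (u (lamn n))).
Notation Mn n := (MM p (lamn n) (rbar (lamn n)) (u (lamn n))).
Notation An n := (aa (lamn n) (rbar (lamn n))).
Notation Bn n := (bb (lamn n) (rbar (lamn n))).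
Notation btn n := (beta N (lamn n)).
Notation W0 := (W 0).

Lemma Hp : 2 < p. Proof. apply Hsub. Qed.
Lemma soln n : pos_radial_sol N p (lamn n) (u (lamn n)). Proof. apply Hsol, Hpos. Qed.
Lemma mxn n : unique_max_point (u (lamn n)) (rbar (lamn n)). Proof. apply Hmax, Hpos. Qed.
Lemma HW0 : 0 < W0. Proof. apply (W_facts p W Hp Hgs). Qed.
Lemma HPW0 : Phi p W0 = 0. Proof. apply (W_facts p W Hp Hgs). Qed.

Ltac inst n := pose proof (Hpos n); pose proof (soln n); pose proof (mxn n).

Lemma S1 S : ev (fun n => S <= sl (lamn n)).
Proof.
  apply is_lim_seq_spec in Hlim. destruct (Hlim (Rmax S 0 ^ 2)) as [N0 H0].
  exists N0. intros n Hn. specialize (H0 n Hn). unfold sl.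
  apply Rle_trans with (Rmax S 0). apply Rmax_l.
  rewrite <- (sqrt_pow2 (Rmax S 0)) by apply Rmax_r. apply sqrt_le_1_alt. lra.
Qed.

Lemma S2 eta : 0 < eta -> ev (fun n => Phi p (Mn n) < eta).
Proof.
  intros He. apply (ev_mono _ _ (fun n Hn => energy_small N p (lamn n) (rbar (lamn n)) (u (lamn n)) W0
     HN Hp (Hpos n) (soln n) (mxn n) HW0 HPW0 eta He Hn)).
  apply S1.
Qed.

Lemma MgeW0 n : W0 <= Mn n.
Proof. apply (M_ge_W0 N p (lamn n) _ _ W0 HN Hp (Hpos n) (soln n) (mxn n) HW0 HPW0). Qed.

Lemma S3 xi : 0 < xi -> ev (fun n => Mn n < W0 + xi).
Proof.
  intros Hxi. assert (Hpp := Phi_pos p W0 Hp HW0 HPW0 (W0 + xi) ltac:(lra)).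
  eapply ev_mono; [|apply (S2 _ Hpp)]. intros n Hn. cbv beta in Hn |- *.
  destruct (Rlt_or_le (Mn n) (W0 + xi)) as [|Hge]; auto.
  assert (Phi p (W0 + xi) <= Phi p (Mn n)) by (apply (Phi_mono p W0 Hp HW0 HPW0); lra). lra.
Qed.

Lemma S4 g : 0 < g -> ev (fun n => btn n < g).
Proof.
  intros Hg. eapply ev_mono; [|apply (S1 ((INR N - 1) / g + 1))]. intros n Hn. cbv beta in Hn |- *.
  assert (Hs := sl_pos (lamn n) (Hpos n)). assert (HN1 := INR_N N HN).
  unfold beta. apply Rmult_lt_reg_r with (sl (lamn n) / g). apply Rdiv_lt_0_compat; lra.
  replace ((INR N - 1) / sl (lamn n) * (sl (lamn n) / g)) with ((INR N - 1) / g) by (field; lra).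
  replace (g * (sl (lamn n) / g)) with (sl (lamn n)) by (field; lra). lra.
Qed.

Lemma S5 L : ev (fun n => L < Bn n).
Proof.
  assert (H : 0 < exp (-2 * L) / 2) by (assert (H := exp_pos (-2 * L)); lra).
  apply (ev_mono _ _ (fun n Hn => b_large N p (lamn n) (rbar (lamn n)) (u (lamn n)) W0
     HN Hp (Hpos n) (soln n) (mxn n) HW0 HPW0 L Hn) (S2 _ H)).
Qed.

Lemma S6 L : 0 <= L -> ev (fun n => L < - An n).
Proof.
  intros HL. set (T := exp (-2 * L)). assert (HT : 0 < T) by apply exp_pos.
  assert (HW := HW0).
  set (e1 := Rmin 1 (T / (8 * W0 ^ 2 + 1))).
  assert (He1 : 0 < e1) by (apply Rmin_glb_lt; [lra|apply Rdiv_lt_0_compat; [auto|]];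
     assert (0 <= W0^2) by apply pow2_ge_0; lra).
  destruct (cont_R exp 0 (cont_of_deriv exp 0 _ (d_exp 0)) e1 He1) as [d [Hd Hc]].
  rewrite exp_0 in Hc.
  assert (HT8 : 0 < T / 8) by lra.
  assert (Hg : 0 < d / (2 * L + 1)) by (apply Rdiv_lt_0_compat; lra).
  eapply ev_mono; [|apply (ev_and _ _ (ev_and _ _ (S2 _ HT8) (S3 W0 HW)) (S4 _ Hg))]. intros n Hn. cbv beta in Hn |- *.
  destruct Hn as [[H1 H2] H3].
  apply (a_large N p (lamn n) (rbar (lamn n)) (u (lamn n)) W0 HN Hp (Hpos n) (soln n) (mxn n) HW0 HPW0 L HL).
  fold T.
  assert (Hb0 : 0 < btn n) by (unfold beta; apply Rdiv_lt_0_compat; [assert (H := INR_N N HN); lra | apply sl_pos, Hpos]).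
  assert (Ht : Rabs (2 * btn n * L - 0) < d).
  { rewrite Rminus_0_r, Rabs_pos_eq by nra.
    apply Rmult_lt_compat_r with (r := 2 * L + 1) in H3; [|lra].
    replace (d / (2 * L + 1) * (2 * L + 1)) with d in H3 by (field; lra). nra. }
  specialize (Hc _ Ht). apply Rabs_def2 in Hc. destruct Hc as [Hc1 Hc2].
  assert (e1 <= 1) by apply Rmin_l. assert (e1 <= T / (8 * W0 ^ 2 + 1)) by apply Rmin_r.
  set (e := exp (2 * btn n * L)) in *.
  assert (HE0 := E0_ge0 N p (lamn n) (rbar (lamn n)) (u (lamn n)) HN Hp (Hpos n) (soln n) (mxn n)).
  assert (HM := MgeW0 n).
  assert (He : 1 <= e) by (unfold e; rewrite <- exp_0; destruct (Req_dec L 0) as [->|];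
     [rewrite Rmult_0_r; lra | left; apply exp_increasing; nra]).
  assert (HM2 : Mn n ^ 2 <= 4 * W0 ^ 2) by nra.
  assert (Hk : T / (8 * W0 ^ 2 + 1) * (4 * W0 ^ 2) < T / 2).
  { apply Rmult_lt_reg_r with (8 * W0 ^ 2 + 1). assert (0 <= W0^2) by apply pow2_ge_0. lra.
    assert (0 <= W0^2) by apply pow2_ge_0.
    replace (T / (8 * W0 ^ 2 + 1) * (4 * W0 ^ 2) * (8 * W0 ^ 2 + 1)) with (T * (4 * W0 ^ 2)) by (field; lra).
    nra. }
  assert (Mn n ^ 2 * (e - 1) <= 4 * W0 ^ 2 * (T / (8 * W0 ^ 2 + 1))).
  { apply Rmult_le_compat; try lra. apply pow2_ge_0. }
  assert (2 * Phi p (Mn n) * e <= 2 * (T / 8) * 2) by nra.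
  lra.
Qed.

Lemma abs_lt_of_sq x g : 0 < g -> x ^ 2 < g ^ 2 -> Rabs x < g.
Proof.
  intros Hg H. rewrite <- (pow2_abs x) in H. assert (0 <= Rabs x) by apply Rabs_pos. nra.
Qed.

Lemma S7 L g : 0 <= L -> 0 < g -> ev (fun n => L < Bn n /\ L < - An n /\
   forall r, - L <= r <= L -> Rabs (ww n r - W r) < g).
Proof.
  intros HL Hg. assert (HW := HW0).
  set (th := g ^ 2 * exp (- kap0 p W0 * L) / 4).
  assert (Hth : 0 < th) by (unfold th; assert (0 < g^2) by (apply pow_lt; lra);
     assert (0 < exp (- kap0 p W0 * L)) by apply exp_pos; nra).
  set (xi := Rmin W0 (sqrt th)).
  assert (Hxi : 0 < xi) by (apply Rmin_glb_lt; auto; apply sqrt_lt_R0; auto).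
  assert (HW4 : 0 < 4 * W0 ^ 2) by (assert (0 < W0^2) by (apply pow_lt; auto); lra).
  set (gb := Rmin 1 (th / (4 * W0 ^ 2))).
  assert (Hgb : 0 < gb) by (apply Rmin_glb_lt; [lra| apply Rdiv_lt_0_compat; auto]).
  eapply ev_mono; [|apply (ev_and _ _ (ev_and _ _ (S5 L) (S6 L HL)) (ev_and _ _ (S3 xi Hxi) (S4 gb Hgb)))].
  intros n [[H1 H2] [H3 H4]]. split; auto. split; auto. intros r Hr.
  assert (xi <= W0) by apply Rmin_l. assert (xi <= sqrt th) by apply Rmin_r.
  assert (gb <= 1) by apply Rmin_l. assert (gb <= th / (4 * W0 ^ 2)) by apply Rmin_r.
  assert (HM := MgeW0 n).
  assert (Hc := close N p (lamn n) (rbar (lamn n)) (u (lamn n)) W0 HN Hp (Hpos n) (soln n) (mxn n) HW0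
     W Hgs eq_refl L HL H1 H2 ltac:(lra) ltac:(lra) r Hr).
  apply abs_lt_of_sq; auto.
  assert (Hs : (Mn n - W0) ^ 2 < th).
  { assert (Hsq : sqrt th * sqrt th = th) by (apply sqrt_sqrt; lra). nra. }
  assert (Hb : btn n * (2 * W0) ^ 2 < th).
  { replace ((2 * W0)^2) with (4 * W0^2) by ring.
    apply Rmult_lt_reg_r with (/ (4 * W0 ^ 2)). apply Rinv_0_lt_compat; auto.
    replace (btn n * (4 * W0 ^ 2) * / (4 * W0 ^ 2)) with (btn n) by (field; lra).
    unfold Rdiv in *. lra. }
  assert (Hex : exp (- kap0 p W0 * L) * exp (kap0 p W0 * L) = 1).
  { rewrite <- exp_plus. replace (- kap0 p W0 * L + kap0 p W0 * L) with 0 by ring. apply exp_0. }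
  assert (0 < exp (kap0 p W0 * L)) by apply exp_pos.
  assert (((Mn n - W0) ^ 2 + btn n * (2 * W0) ^ 2) * exp (kap0 p W0 * L) < 2 * th * exp (kap0 p W0 * L))
    by (apply Rmult_lt_compat_r; lra).
  assert (2 * th * exp (kap0 p W0 * L) = g ^ 2 / 2).
  { replace (2 * th * exp (kap0 p W0 * L)) with (g^2/2 * (exp (- kap0 p W0 * L) * exp (kap0 p W0 * L))) by (unfold th; field).
    rewrite Hex; ring. }
  assert (0 < g^2) by (apply pow_lt; lra).
  lra.
Qed.

Lemma R0_exists : exists R0, 1 <= R0 /\ forall r, R0 <= Rabs r -> W r < delta0 p / 2.
Proof.
  destruct Hgs as [Hpw [_ [_ [Hlp Hlm]]]].
  assert (Hd : 0 < delta0 p / 2) by (assert (H := delta0_pos p); lra).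
  destruct (is_lim_pinf_0 W Hlp _ Hd) as [Rp HRp].
  destruct (is_lim_minf_0 W Hlm _ Hd) as [Rm HRm].
  exists (Rmax 1 (Rmax (Rp + 1) (- Rm + 1))). split. apply Rmax_l.
  intros r Hr.
  assert (A1 := Rmax_l 1 (Rmax (Rp + 1) (- Rm + 1))).
  assert (A2 := Rmax_r 1 (Rmax (Rp + 1) (- Rm + 1))).
  assert (A3 := Rmax_l (Rp + 1) (- Rm + 1)). assert (A4 := Rmax_r (Rp + 1) (- Rm + 1)).
  destruct (Rle_or_lt 0 r).
  - rewrite Rabs_pos_eq in Hr by lra. specialize (HRp r ltac:(lra)).
    apply Rabs_def2 in HRp. lra.
  - rewrite Rabs_left in Hr by lra. specialize (HRm r ltac:(lra)).
    apply Rabs_def2 in HRm. lra.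
Qed.

Section Tails.
Variable R0 : R.
Hypothesis HR01 : 1 <= R0.
Hypothesis HR0W : forall r, R0 <= Rabs r -> W r < delta0 p / 2.

Lemma S8 : ev (fun n => R0 < Bn n /\ R0 < - An n /\
  forall r, An n < r < Bn n -> R0 <= Rabs r -> ww n r <= delta0 p * exp (- (Rabs r - R0) / 2)).
Proof.
  assert (Hd : 0 < delta0 p / 2) by (assert (H := delta0_pos p); lra).
  eapply ev_mono; [|apply (S7 R0 (delta0 p / 2) ltac:(lra) Hd)].
  intros n [H1 [H2 H3]]. split; auto. split; auto.
  assert (Hw1 : ww n R0 <= delta0 p).
  { specialize (H3 R0 ltac:(lra)). apply Rabs_def2 in H3.
    assert (W R0 < delta0 p / 2) by (apply HR0W; rewrite Rabs_pos_eq; lra). lra. }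
  assert (Hw2 : ww n (- R0) <= delta0 p).
  { specialize (H3 (- R0) ltac:(lra)). apply Rabs_def2 in H3.
    assert (W (- R0) < delta0 p / 2) by (apply HR0W; rewrite Rabs_Ropp, Rabs_pos_eq; lra). lra. }
  pose proof (Hpos n) as Hl. pose proof (soln n) as Hs. pose proof (mxn n) as Hm.
  assert (Hdp := delta0_pos p).
  intros r Hr HRr. destruct (Rle_or_lt 0 r) as [Hr0|Hr0].
  - rewrite Rabs_pos_eq in * by lra.
    assert (T := tail_lemma p _ _ _ _ _ _ Hp (HR N p _ _ _ HN Hp Hl Hs Hm)
       (monoR N p _ _ _ W0 HN Hp Hl Hs Hm HW0 HPW0) (ER_ge0 N p _ _ _ HN Hp Hl Hs Hm)
       R0 ltac:(lra) Hw1 r ltac:(lra)).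
    assert (0 < exp (- (r - R0) / 2)) by apply exp_pos.
    assert (ww n R0 * exp (- (r - R0) / 2) <= delta0 p * exp (- (r - R0) / 2)) by (apply Rmult_le_compat_r; lra).
    lra.
  - rewrite Rabs_left in * by lra.
    assert (HEl : forall x, 0 <= x < - An n -> 0 <= En p (fun y => ww n (- y)) (fun y => - ww1 n (- y)) x).
    { intros x Hx. assert (A := EL_ge N p _ _ _ HN Hp Hl Hs Hm x Hx).
      assert (B := E0_ge0 N p _ _ _ HN Hp Hl Hs Hm). lra. }
    assert (T := tail_lemma p _ _ _ _ _ _ Hp (HL N p _ _ _ HN Hp Hl Hs Hm)
       (monoL N p _ _ _ W0 HN Hp Hl Hs Hm HW0 HPW0) HEl
       R0 ltac:(lra) Hw2 (- r) ltac:(lra)).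
    cbv beta in T. rewrite Ropp_involutive in T.
    assert (0 < exp (- (- r - R0) / 2)) by apply exp_pos.
    assert (ww n (- R0) * exp (- (- r - R0) / 2) <= delta0 p * exp (- (- r - R0) / 2)) by (apply Rmult_le_compat_r; lra).
    lra.
Qed.

Lemma S9 r : R0 <= Rabs r -> W r <= delta0 p * exp (- (Rabs r - R0) / 2).
Proof.
  intros Hr. destruct (Rle_or_lt (W r) (delta0 p * exp (- (Rabs r - R0) / 2))) as [|Hlt]; auto. exfalso.
  set (g := W r - delta0 p * exp (- (Rabs r - R0) / 2)).
  assert (Hg : 0 < g) by (unfold g; lra).
  destruct (ev_and _ _ (S7 (Rabs r) g ltac:(apply Rabs_pos) Hg) S8) as [N0 HN0].
  destruct (HN0 N0 (le_n _)) as [[H1 [H2 H3]] [_ [_ H4]]].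
  assert (Hrr : - Rabs r <= r <= Rabs r) by (split; [assert (H := Rle_abs (- r)); rewrite Rabs_Ropp in H; lra| apply Rle_abs]).
  specialize (H3 r Hrr). specialize (H4 r ltac:(lra) Hr).
  apply Rabs_def2 in H3. unfold g in *. lra.
Qed.
End Tails.

Lemma nat_above X : exists m : nat, X < INR m.
Proof.
  destruct (nfloor_ex (Rmax X 0) (Rmax_r X 0)) as [n Hn]. exists (S n).
  rewrite S_INR. assert (H := Rmax_l X 0). lra.
Qed.

Lemma chasles (f : R -> R) a b c : ex_RInt f a b -> ex_RInt f b c ->
  RInt f a c = RInt f a b + RInt f b c.
Proof. intros H1 H2. symmetry. apply (RInt_Chasles (V:=R_CompleteNormedModule)); auto. Qed.

Lemma exp_half_sq x R0 : exp (- (x - R0) / 2) ^ 2 * exp (x / 2) = exp R0 * exp (- x / 2).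
Proof. simpl. rewrite Rmult_1_r, <- !exp_plus. f_equal. field. Qed.

Lemma final_k k : exists I,
  is_RInt_gen (fun r => W r ^ 2 * r ^ k) (Rbar_locally m_infty) (Rbar_locally p_infty) I /\
  is_lim_seq (fun n => RInt (fun r => ww n r ^ 2 * r ^ k) (An n) (Bn n)) I.
Proof.
  destruct R0_exists as [R0 [HR01 HR0W]].
  destruct (pow_exp_bound k) as [Ck [HCk HCkb]].
  set (dl := delta0 p). assert (Hdl : 0 < dl) by apply delta0_pos.
  set (C := dl ^ 2 * exp R0 * Ck).
  assert (HC : 0 < C) by (unfold C; assert (0 < dl^2) by (apply pow_lt; lra);
     assert (0 < exp R0) by apply exp_pos; apply Rmult_lt_0_compat; auto; apply Rmult_lt_0_compat; auto).
  assert (Henv : forall x y, R0 <= Rabs x -> 0 <= y <= dl * exp (- (Rabs x - R0) / 2) ->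
     Rabs (y ^ 2 * x ^ k) <= C * exp (- Rabs x / 2)).
  { intros x y Hx Hy. rewrite Rabs_mult, <- (RPow_abs x k).
    rewrite (Rabs_pos_eq (y^2)) by apply pow2_ge_0.
    assert (H1 : y ^ 2 <= (dl * exp (- (Rabs x - R0) / 2)) ^ 2) by (apply pow_incr; lra).
    assert (H2 := HCkb (Rabs x) (Rabs_pos x)).
    assert (0 <= Rabs x ^ k) by (apply pow_le, Rabs_pos).
    assert (0 <= y^2) by apply pow2_ge_0.
    apply Rle_trans with ((dl * exp (- (Rabs x - R0) / 2)) ^ 2 * (Ck * exp (Rabs x / 2))).
    apply Rmult_le_compat; auto.
    replace ((dl * exp (- (Rabs x - R0) / 2)) ^ 2 * (Ck * exp (Rabs x / 2)))
      with (dl ^ 2 * Ck * (exp (- (Rabs x - R0) / 2) ^ 2 * exp (Rabs x / 2))) by ring.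
    rewrite exp_half_sq. unfold C. right; ring. }
  set (g := fun r => W r ^ 2 * r ^ k).
  assert (Hgt : forall x, R0 <= Rabs x -> Rabs (g x) <= C * exp (- Rabs x / 2)).
  { intros x Hx. apply Henv; auto. destruct Hgs as [Hpw _]. split. left; apply Hpw.
    apply (S9 R0 HR01 HR0W x Hx). }
  assert (Hgex : forall a b, ex_RInt g a b).
  { intros a b. apply (ex_RInt_continuous (V:=R_CompleteNormedModule)). intros z _. unfold g.
    apply cont_mult; [|apply cont_pow, cont_id]. apply cont_pow.
    destruct Hgs as [_ [_ [Hode _]]]. destruct (Hode z) as [A _]. apply (cont_of_deriv _ _ _ A). }
  set (T := fun L => 2 * C * exp (- L / 2)).
  assert (HTs : forall eps, 0 < eps -> forall L, 4 * C / eps <= L -> T L < eps).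
  { intros eps He L HL. assert (HL0 : 0 < L) by (assert (0 < 4 * C / eps) by (apply Rdiv_lt_0_compat; lra); lra).
    unfold T. assert (Hi := exp_ineq1 (L / 2) ltac:(lra)).
    assert (Hex : exp (- L / 2) * exp (L / 2) = 1) by (rewrite <- exp_plus; replace (- L / 2 + L / 2) with 0 by field; apply exp_0).
    assert (0 < exp (- L / 2)) by apply exp_pos.
    assert (Hq : exp (- L / 2) * (L / 2) < exp (- L / 2) * exp (L / 2)) by (apply Rmult_lt_compat_l; lra).
    assert (2 * C * exp (- L / 2) * (L / 2) < 2 * C).
    { replace (2 * C * exp (- L / 2) * (L / 2)) with (2 * C * (exp (- L / 2) * (L / 2))) by ring.
      replace (2 * C) with (2 * C * (exp (- L / 2) * exp (L / 2))) at 2 by (rewrite Hex; ring).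
      apply Rmult_lt_compat_l; lra. }
    assert (4 * C <= eps * L) by (apply Rmult_le_compat_l with (r := eps) in HL; [|lra];
       replace (eps * (4 * C / eps)) with (4 * C) in HL by (field; lra); lra).
    nra. }
  assert (HTpos : forall L, 0 <= T L) by (intros L; unfold T; assert (0 < exp (- L / 2)) by apply exp_pos; nra).
  set (F := fun L => RInt g (- L) L).
  assert (Hgen : forall L x y, R0 <= L -> x <= - L -> L <= y -> Rabs (RInt g x y - F L) <= 2 * T L).
  { intros L x y HL Hx Hy. unfold F.
    rewrite (chasles g x (- L) y) by auto. rewrite (chasles g (- L) L y) by auto.
    assert (A1 : Rabs (RInt g x (- L)) <= 2 * C * exp (- L / 2)).
    { apply tail_int_left; [lra|lra|auto|]. intros z Hz.
      replace (z / 2) with (- Rabs z / 2) by (rewrite Rabs_left by lra; field). apply Hgt.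
      rewrite Rabs_left; lra. }
    assert (A2 : Rabs (RInt g L y) <= 2 * C * exp (- L / 2)).
    { apply tail_int_right; [lra|lra|auto|]. intros z Hz.
      replace (- z / 2) with (- Rabs z / 2) by (rewrite Rabs_pos_eq by lra; field). apply Hgt.
      rewrite Rabs_pos_eq; lra. }
    unfold T.
    replace (RInt g x (- L) + (RInt g (- L) L + RInt g L y) - RInt g (- L) L)
      with (RInt g x (- L) + RInt g L y) by ring.
    eapply Rle_trans. apply Rabs_triang. lra. }
  set (FL := fun m : nat => F (INR m)).
  assert (Hcau : ex_lim_seq_cauchy FL).
  { intros eps. destruct (nat_above (Rmax R0 (4 * C / (eps / 4)))) as [N0 HN0].
    assert (A1 := Rmax_l R0 (4 * C / (eps / 4))). assert (A2 := Rmax_r R0 (4 * C / (eps / 4))).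
    assert (He : 0 < eps) by apply cond_pos.
    assert (HT0 : T (INR N0) < eps / 4) by (apply HTs; lra).
    exists N0. intros n m Hn Hm.
    assert (Hn' := le_INR _ _ Hn). assert (Hm' := le_INR _ _ Hm).
    assert (B1 := Hgen (INR N0) (- INR n) (INR n) ltac:(lra) ltac:(lra) ltac:(lra)).
    assert (B2 := Hgen (INR N0) (- INR m) (INR m) ltac:(lra) ltac:(lra) ltac:(lra)).
    unfold FL, F. apply Rabs_le_between in B1. apply Rabs_le_between in B2. unfold F in B1, B2. apply Rabs_def1; lra. }
  apply ex_lim_seq_cauchy_corr in Hcau. destruct Hcau as [I HI].
  assert (HFI : forall L, R0 <= L -> Rabs (F L - I) <= 2 * T L).
  { intros L HL. destruct (Rle_or_lt (Rabs (F L - I)) (2 * T L)) as [|Hlt]; auto. exfalso.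
    set (d := Rabs (F L - I) - 2 * T L). assert (Hd : 0 < d) by (unfold d; lra).
    apply is_lim_seq_spec in HI. destruct (HI (mkposreal d Hd)) as [N0 HN0].
    destruct (nat_above L) as [m Hm].
    specialize (HN0 (Nat.max N0 m) ltac:(lia)). simpl in HN0.
    assert (Hm2 := le_INR _ _ (Nat.le_max_r N0 m)).
    assert (B := Hgen L (- INR (Nat.max N0 m)) (INR (Nat.max N0 m)) HL ltac:(lra) ltac:(lra)).
    unfold FL, F in HN0. unfold F in B.
    assert (Rabs (F L - I) <= Rabs (RInt g (- INR (Nat.max N0 m)) (INR (Nat.max N0 m)) - F L) +
              Rabs (RInt g (- INR (Nat.max N0 m)) (INR (Nat.max N0 m)) - I)).
    { replace (F L - I) with (- (RInt g (- INR (Nat.max N0 m)) (INR (Nat.max N0 m)) - F L) +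
        (RInt g (- INR (Nat.max N0 m)) (INR (Nat.max N0 m)) - I)) by ring.
      eapply Rle_trans. apply Rabs_triang. rewrite Rabs_Ropp. lra. }
    unfold F in *. unfold d in HN0. lra. }
  exists I. split.
  -
    intros P [eps HP].
    destruct (nat_above (Rmax R0 (4 * C / (eps / 8)))) as [m Hm].
    assert (A1 := Rmax_l R0 (4 * C / (eps / 8))). assert (A2 := Rmax_r R0 (4 * C / (eps / 8))).
    assert (He : 0 < eps) by apply cond_pos.
    set (L := INR m).
    assert (HT0 : T L < eps / 8) by (apply HTs; unfold L; lra).
    apply (Filter_prod _ _ _ (fun x => x < - L) (fun y => L < y)).
    + exists (- L). auto.
    + exists L. auto.
    + intros x y Hx Hy. exists (RInt g x y). split.
      * apply (RInt_correct (V:=R_CompleteNormedModule)). apply Hgex.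
      * apply HP. change (Rabs (RInt g x y - I) < eps).
        assert (B1 := Hgen L x y ltac:(unfold L; lra) ltac:(lra) ltac:(lra)).
        assert (B2 := HFI L ltac:(unfold L; lra)).
        replace (RInt g x y - I) with ((RInt g x y - F L) + (F L - I)) by ring.
        eapply Rle_lt_trans. apply Rabs_triang. lra.
  -
    apply is_lim_seq_spec. intros eps.
    assert (He : 0 < eps) by apply cond_pos.
    destruct (nat_above (Rmax R0 (4 * C / (eps / 8)))) as [m Hm].
    assert (A1 := Rmax_l R0 (4 * C / (eps / 8))). assert (A2 := Rmax_r R0 (4 * C / (eps / 8))).
    set (L := INR m). assert (HLR0 : R0 < L) by (unfold L; lra).
    assert (HT0 : T L < eps / 8) by (apply HTs; unfold L; lra).
    assert (HW := HW0).
    set (K1 := 2 * L * (3 * W0 * (L ^ k + 1)) + 1).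
    assert (HK1 : 0 < K1) by (unfold K1; assert (0 <= L^k) by (apply pow_le; lra);
      assert (0 <= 2 * L * (3 * W0 * (L ^ k + 1))) by (apply Rmult_le_pos; [lra|apply Rmult_le_pos; lra]); lra).
    set (gm := eps / (4 * K1)).
    assert (Hgm : 0 < gm) by (unfold gm; apply Rdiv_lt_0_compat; lra).
    destruct (ev_and _ _ (ev_and _ _ (S7 L gm ltac:(lra) Hgm) (S8 R0 HR01 HR0W)) (S3 W0 HW)) as [N0 HN0].
    exists N0. intros n Hn. destruct (HN0 n Hn) as [[[H1 [H2 H3]] [H4 [H5 H6]]] H7].
    pose proof (Hpos n) as Hl. pose proof (soln n) as Hs. pose proof (mxn n) as Hmx.
    assert (Hab := ab_props (lamn n) (rbar (lamn n)) (u (lamn n)) Hl Hmx).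
    set (f := fun r => ww n r ^ 2 * r ^ k).
    assert (Hfex := w_ex_RInt N p (lamn n) (rbar (lamn n)) (u (lamn n)) Hl Hs Hmx k). fold f in Hfex.
    assert (E1 : ex_RInt f (An n) (- L)) by (apply (ex_RInt_Chasles_1 (V:=R_CompleteNormedModule)) with (Bn n); auto; lra).
    assert (E2 : ex_RInt f (- L) (Bn n)) by (apply (ex_RInt_Chasles_2 (V:=R_CompleteNormedModule)) with (An n); auto; lra).
    assert (E3 : ex_RInt f (- L) L) by (apply (ex_RInt_Chasles_1 (V:=R_CompleteNormedModule)) with (Bn n); auto; lra).
    assert (E4 : ex_RInt f L (Bn n)) by (apply (ex_RInt_Chasles_2 (V:=R_CompleteNormedModule)) with (- L); auto; lra).
    assert (Hft : forall x, An n < x < Bn n -> R0 <= Rabs x -> Rabs (f x) <= C * exp (- Rabs x / 2)).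
    { intros x Hx HRx. apply Henv; auto. split. left; apply (w_props N p (lamn n) (rbar (lamn n)) (u (lamn n)) HN Hp Hl Hs x Hx).
      apply H6; auto. }
    assert (T1 : Rabs (RInt f (An n) (- L)) <= T L).
    { unfold T. replace (- L / 2) with ((- L) / 2) by field.
      apply tail_int_left; [lra|lra|auto|]. intros z Hz.
      replace (z / 2) with (- Rabs z / 2) by (rewrite Rabs_left by lra; field). apply Hft. lra.
      rewrite Rabs_left; lra. }
    assert (T2 : Rabs (RInt f L (Bn n)) <= T L).
    { unfold T. apply tail_int_right; [lra|lra|auto|]. intros z Hz.
      replace (- z / 2) with (- Rabs z / 2) by (rewrite Rabs_pos_eq by lra; field). apply Hft. lra.
      rewrite Rabs_pos_eq; lra. }
    assert (T3 : Rabs (RInt f (- L) L - F L) <= (L - - L) * (3 * W0 * gm * (L ^ k + 1))).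
    { unfold F. apply diff_int; auto. lra. intros x Hx. unfold f, g.
      specialize (H3 x Hx).
      assert (Hx' : An n < x < Bn n) by lra.
      assert (Hwp := w_props N p (lamn n) (rbar (lamn n)) (u (lamn n)) HN Hp Hl Hs x Hx').
      destruct Hwp as [_ [_ [Hwpos _]]].
      assert (HwM : ww n x <= Mn n).
      { destruct (Rle_or_lt 0 x).
        - apply (h_leM p _ _ _ _ _ _ (HR N p _ _ _ HN Hp Hl Hs Hmx)). lra.
        - assert (Hq := h_leM p _ _ _ _ _ _ (HL N p _ _ _ HN Hp Hl Hs Hmx) (- x) ltac:(lra)).
          cbv beta in Hq. rewrite Ropp_involutive in Hq. exact Hq. }
      destruct Hgs as [Hpw [Hmw _]]. assert (HWx := Hpw x). assert (HWm := Hmw x).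
      replace (ww n x ^ 2 * x ^ k - W x ^ 2 * x ^ k) with ((ww n x - W x) * (ww n x + W x) * x ^ k) by ring.
      rewrite !Rabs_mult. rewrite (Rabs_pos_eq (ww n x + W x)) by lra.
      assert (Hxk : Rabs (x ^ k) <= L ^ k).
      { rewrite <- RPow_abs. apply pow_incr. split. apply Rabs_pos. apply Rabs_le. lra. }
      assert (0 <= Rabs (ww n x - W x)) by apply Rabs_pos.
      assert (0 <= Rabs (x ^ k)) by apply Rabs_pos.
      assert (Rabs (ww n x - W x) * (ww n x + W x) <= gm * (3 * W0)).
      { apply Rmult_le_compat; lra. }
      assert (Rabs (ww n x - W x) * (ww n x + W x) * Rabs (x ^ k) <= gm * (3 * W0) * (L ^ k + 1)).
      { apply Rmult_le_compat; try lra. apply Rmult_le_pos; lra. }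
      lra. }
    assert (T4 := HFI L ltac:(lra)).
    assert (Hsplit : RInt f (An n) (Bn n) = RInt f (An n) (- L) + RInt f (- L) L + RInt f L (Bn n)).
    { rewrite (chasles f (An n) (- L) (Bn n)) by auto. rewrite (chasles f (- L) L (Bn n)) by auto. rewrite <- Rplus_assoc; reflexivity. }
    assert (HK : (L - - L) * (3 * W0 * gm * (L ^ k + 1)) <= eps / 4).
    { replace ((L - - L) * (3 * W0 * gm * (L ^ k + 1))) with ((K1 - 1) * gm) by (unfold K1; ring).
      unfold gm. replace ((K1 - 1) * (eps / (4 * K1))) with (eps / 4 - eps / (4 * K1)) by (field; lra).
      assert (0 < eps / (4 * K1)) by (apply Rdiv_lt_0_compat; lra). lra. }
    fold f. rewrite Hsplit.
    replace (RInt f (An n) (- L) + RInt f (- L) L + RInt f L (Bn n) - I) with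
      (RInt f (An n) (- L) + RInt f L (Bn n) + (RInt f (- L) L - F L) + (F L - I)) by ring.
    eapply Rle_lt_trans. apply Rabs_triang.
    eapply Rle_lt_trans. apply Rplus_le_compat_r. apply Rabs_triang.
    eapply Rle_lt_trans. apply Rplus_le_compat_r. apply Rplus_le_compat_r. apply Rabs_triang.
    lra.
Qed.
End Main.

End File10.

Theorem corollary2p6 (N : nat) (p : R) (u : R -> R -> R) (rbar : R -> R)
  (W : R -> R) (lamn : nat -> R) :
  (2 <= N)%nat ->
  subcritical N p ->
  (forall lam, 0 < lam -> pos_radial_sol N p lam (u lam)) ->
  (forall lam, 0 < lam -> unique_max_point (u lam) (rbar lam)) ->
  ground_state p W ->
  (forall n, 0 < lamn n) ->
  is_lim_seq lamn p_infty ->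
  exists phi : nat -> nat,
    (forall n, (phi n < phi (S n))%nat) /\
    forall k : nat, (k < N)%nat ->
      exists I : R,
        is_RInt_gen (fun r => (W r) ^ 2 * r ^ k)
          (Rbar_locally m_infty) (Rbar_locally p_infty) I /\
        is_lim_seq
          (fun n =>
             let lam := lamn (phi n) in
             let rb := rbar lam in
             RInt (fun r => (rescaled p lam rb (u lam) r) ^ 2 * r ^ k)
                  (sqrt lam * (1 - rb)) (sqrt lam * (2 - rb)))
          (Finite I).
Proof.
  intros HN Hsub Hsol Hmax Hgs Hpos Hlim.
  exists (fun n => n). split. intros n; lia.
  intros k Hk.
  destruct (final_k N p u rbar W lamn HN Hsub Hsol Hmax Hgs Hpos Hlim k) as [I [H1 H2]].
  exists I. split. exact H1.
  eapply is_lim_seq_ext; [|exact H2]. intros n. reflexivity.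
Qed.
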